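(* Let $\varphi$ be the solution described below and let $u_*$ be a point of an open boundary edge $(p_i,p_{i+1})$ of $U$ (so $u_*$ is not a vertex). Then as $u\in U$ tends to $u_*$, $\nabla\varphi(u)\cdot\nu\to+\infty$, where $\nu$ is the outward unit normal to the edge, and $\nabla\varphi(u)\cdot(p_{i+1}-p_i)\to c_i:=b_{i+1}-b_i$.
   Context: $n\ge3$; $p_1,\dots,p_n\in\mathbb{R}^2_{(u_1,u_2)}$ are distinct vertices, in counterclockwise order, of a convex polygon with interior $U$; indices mod $n$ ($p_{n+1}=p_1$, $b_{n+1}=b_1$). $A\ge0$, $V(u)=A+\sum_i\frac{1}{2|u-p_i|}$. For $b_1,\dots,b_n\in\mathbb{R}$, $\varphi:\overline U\to\mathbb{R}$ is the unique continuous convex function, smooth in $U$, with $\det D^2\varphi=V$ in $U$, $\varphi(p_i)=b_i$, and $\varphi$ affine linear on each edge $[p_i,p_{i+1}]$. *)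

(* Defs.v *)
From Stdlib Require Import Reals Lra Lia List.
From Coquelicot Require Import Coquelicot.
Open Scope R_scope.

Definition pt := (R * R)%type.

Definition nxt (n i : nat) : nat := Nat.modulo (S i) n.

Definition vsub (a b : pt) : pt := (fst a - fst b, snd a - snd b).
Definition dot (a b : pt) : R := fst a * fst b + snd a * snd b.
Definition cross (a b : pt) : R := fst a * snd b - snd a * fst b.
Definition vnorm (a : pt) : R := sqrt (dot a a).
Definition lerp (a b : pt) (t : R) : pt :=
  ((1 - t) * fst a + t * fst b, (1 - t) * snd a + t * snd b).

(* p_0,...,p_{n-1} are the distinct vertices, in counterclockwise order,
   of a (strictly) convex polygon: every other vertex lies strictly to the
   left of each directed edge [p_i, p_{i+1}]. *)
Definition ccw_convex_polygon (n : nat) (p : nat -> pt) : Prop :=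
  forall i j, (i < n)%nat -> (j < n)%nat -> j <> i -> j <> nxt n i ->
    cross (vsub (p (nxt n i)) (p i)) (vsub (p j) (p i)) > 0.

Definition polyU (n : nat) (p : nat -> pt) (u : pt) : Prop :=
  forall i, (i < n)%nat -> cross (vsub (p (nxt n i)) (p i)) (vsub u (p i)) > 0.
Definition polyUbar (n : nat) (p : nat -> pt) (u : pt) : Prop :=
  forall i, (i < n)%nat -> cross (vsub (p (nxt n i)) (p i)) (vsub u (p i)) >= 0.

Fixpoint sumR (n : nat) (f : nat -> R) : R :=
  match n with O => 0 | S k => sumR k f + f k end.
Definition Vfun (A : R) (n : nat) (p : nat -> pt) (u : pt) : R :=
  A + sumR n (fun i => / (2 * vnorm (vsub u (p i)))).

(* partial derivatives: d = false is d/du1, d = true is d/du2 *)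
Definition pd (d : bool) (f : pt -> R) : pt -> R :=
  fun u => if d then Derive (fun t => f (fst u, t)) (snd u)
           else Derive (fun t => f (t, snd u)) (fst u).
Definition ex_pd (d : bool) (f : pt -> R) (u : pt) : Prop :=
  if d then ex_derive (fun t => f (fst u, t)) (snd u)
  else ex_derive (fun t => f (t, snd u)) (fst u).
Fixpoint iter_pd (ds : list bool) (f : pt -> R) : pt -> R :=
  match ds with nil => f | d :: ds' => pd d (iter_pd ds' f) end.

Definition smooth_on (U : pt -> Prop) (f : pt -> R) : Prop :=
  forall ds : list bool,
    (forall d u, U u -> ex_pd d (iter_pd ds f) u) /\
    (forall u, U u -> continuous (iter_pd ds f) u).

Definition hess_det (f : pt -> R) (u : pt) : R :=
  pd false (pd false f) u * pd true (pd true f) u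
  - pd true (pd false f) u * pd false (pd true f) u.

Definition grad (f : pt -> R) (u : pt) : pt := (pd false f u, pd true f u).

Definition continuous_on (D : pt -> Prop) (f : pt -> R) : Prop :=
  forall u, D u -> filterlim f (within D (locally u)) (locally (f u)).

Definition convex_on (D : pt -> Prop) (f : pt -> R) : Prop :=
  forall x y t, D x -> D y -> 0 <= t <= 1 ->
    f (lerp x y t) <= (1 - t) * f x + t * f y.

Definition is_solution (n : nat) (p : nat -> pt) (A : R) (b : nat -> R)
    (phi : pt -> R) : Prop :=
  continuous_on (polyUbar n p) phi /\
  convex_on (polyUbar n p) phi /\
  smooth_on (polyU n p) phi /\
  (forall u, polyU n p u -> hess_det phi u = Vfun A n p u) /\
  (forall i, (i < n)%nat -> phi (p i) = b i) /\
  (forall i t, (i < n)%nat -> 0 <= t <= 1 ->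
     phi (lerp (p i) (p (nxt n i)) t) = (1 - t) * b i + t * b (nxt n i)).

(* Main.v *)
Require Import Defs.
From Stdlib Require Import Reals Lra Lia List Classical ClassicalEpsilon.
From Coquelicot Require Import Coquelicot.
Open Scope R_scope.

Lemma LIM0 : forall a b K t0, 0 < t0 ->
  (forall t, 0 < t < t0 -> a <= b + K * t) -> a <= b.
Proof.
  intros a b K t0 Ht0 H.
  destruct (Rle_dec a b) as [h|h]; auto. apply Rnot_le_lt in h.
  set (t := Rmin (t0/2) ((a-b)/(2*(Rabs K + 1)))).
  assert (Hk : 0 <= Rabs K) by apply Rabs_pos.
  assert (t1 : t <= t0/2) by apply Rmin_l.
  assert (t2 : t <= (a-b)/(2*(Rabs K + 1))) by apply Rmin_r.
  assert (t3 : 0 < t).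
  { unfold t, Rmin; destruct (Rle_dec _ _); [lra|].
    apply Rdiv_lt_0_compat; lra. }
  specialize (H t ltac:(lra)).
  assert (K * t <= Rabs K * t).
  { apply Rmult_le_compat_r; [lra|apply Rle_abs]. }
  assert (Rabs K * t <= (a-b)/2).
  { apply Rle_trans with (Rabs K * ((a-b)/(2*(Rabs K + 1)))).
    apply Rmult_le_compat_l; lra.
    apply Rle_trans with ((Rabs K + 1) * ((a-b)/(2*(Rabs K + 1)))).
    apply Rmult_le_compat_r; [|lra]. apply Rlt_le, Rdiv_lt_0_compat; lra.
    right; field; lra. }
  lra.
Qed.

Lemma ln_le_xm1 : forall x, 0 < x -> ln x <= x - 1.
Proof.
  intros x Hx. destruct (Req_dec (ln x) 0) as [h|h].
  - rewrite h. destruct (Rle_dec 1 x); auto. lra.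
    exfalso. assert (ln x < ln 1) by (apply ln_increasing; lra). rewrite ln_1 in H. lra.
  - pose proof (exp_ineq1 _ h). rewrite exp_ln in H; lra.
Qed.

Lemma ln_ge0 : forall x, 1 <= x -> 0 <= ln x.
Proof.
  intros x Hx. destruct (Req_dec x 1) as [->|h]. rewrite ln_1; lra.
  left. rewrite <- ln_1. apply ln_increasing; lra.
Qed.

Lemma finite_min : forall (P : nat -> R -> Prop) n,
  (forall j T T', 0 < T' <= T -> P j T -> P j T') ->
  (forall j, (j < n)%nat -> exists T, 0 < T /\ P j T) ->
  exists T, 0 < T /\ forall j, (j < n)%nat -> P j T.
Proof.
  intros P n Hmono. induction n as [|n IH]; intros H.
  - exists 1; split; [lra|]. intros j Hj; lia.
  - destruct IH as [T1 [HT1 H1]]. intros j Hj; apply H; lia.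
    destruct (H n ltac:(lia)) as [T2 [HT2 H2]].
    exists (Rmin T1 T2). split. unfold Rmin; destruct (Rle_dec _ _); lra.
    intros j Hj. destruct (Nat.eq_dec j n) as [->|hj].
    + apply Hmono with T2; auto. split. unfold Rmin; destruct (Rle_dec _ _); lra. apply Rmin_r.
    + apply Hmono with T1; auto. split. unfold Rmin; destruct (Rle_dec _ _); lra. apply Rmin_l.
      apply H1; lia.
Qed.

Lemma locally2_intro : forall (x1 x2 : R) (P : R*R -> Prop),
  (exists r, 0 < r /\ forall a b, Rabs (a - x1) < r -> Rabs (b - x2) < r -> P (a,b)) ->
  locally (x1,x2) P.
Proof.
  intros x1 x2 P [r [Hr H]]. exists (mkposreal r Hr). intros [a b] [h1 h2].
  apply H; assumption.
Qed.

Lemma locally2_elim : forall (x1 x2 : R) (P : R*R -> Prop),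
  locally (x1,x2) P ->
  exists r, 0 < r /\ forall a b, Rabs (a - x1) < r -> Rabs (b - x2) < r -> P (a,b).
Proof.
  intros x1 x2 P [r H]. exists r. split. apply cond_pos.
  intros a b h1 h2. apply (H (a,b)). split; assumption.
Qed.

Lemma cont_within_eps : forall (D : pt -> Prop) (f : pt -> R) (x1 x2 : R),
  filterlim f (within D (locally (x1,x2))) (locally (f (x1,x2))) ->
  forall eps, 0 < eps -> exists r, 0 < r /\ forall a b, Rabs (a - x1) < r -> Rabs (b - x2) < r ->
    D (a,b) -> Rabs (f (a,b) - f (x1,x2)) < eps.
Proof.
  intros D f x1 x2 H eps He.
  destruct (proj1 (filterlim_locally _ _) H (mkposreal eps He)) as [r Hr].
  exists r. split. apply cond_pos. intros a b h1 h2 hD.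
  apply (Hr (a,b)). split; assumption. assumption.
Qed.

Lemma cont_eps : forall (f : pt -> R) (x1 x2 : R),
  continuous f (x1,x2) ->
  forall eps, 0 < eps -> exists r, 0 < r /\ forall a b, Rabs (a - x1) < r -> Rabs (b - x2) < r ->
    Rabs (f (a,b) - f (x1,x2)) < eps.
Proof.
  intros f x1 x2 H eps He.
  destruct (proj1 (filterlim_locally _ _) H (mkposreal eps He)) as [r Hr].
  exists r. split. apply cond_pos. intros a b h1 h2.
  apply (Hr (a,b)). split; assumption.
Qed.

Lemma small_pos : forall a b, 0 < a -> 0 < b -> exists c, 0 < c /\ c <= a /\ c <= b.
Proof. intros a b Ha Hb. exists (Rmin a b). split. unfold Rmin; destruct (Rle_dec a b); lra.
  split; [apply Rmin_l|apply Rmin_r]. Qed.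

Lemma cont2d : forall (g : pt -> R) x y, continuous g (x,y) ->
  continuity_2d_pt (fun a b => g (a,b)) x y.
Proof.
  intros g x y H. apply continuity_2d_pt_filterlim.
  eapply filterlim_ext; [|exact H]. intros [a b]; reflexivity.
Qed.

Lemma exd : forall (U : pt -> Prop) phi, smooth_on U phi ->
  forall k ds x y, U (x,y) -> ex_diff_n (fun a b => iter_pd ds phi (a,b)) k x y.
Proof.
  intros U phi Hs k. induction k as [|k IH]; intros ds x y Hu.
  - simpl. split; auto. apply cont2d. apply (proj2 (Hs ds)); auto.
  - simpl. split. apply cont2d. apply (proj2 (Hs ds)); auto.
    split. exact (proj1 (Hs ds) false (x,y) Hu).
    split. exact (proj1 (Hs ds) true (x,y) Hu).
    split. exact (IH (false :: ds) x y Hu).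
    exact (IH (true :: ds) x y Hu).
Qed.

Lemma DL2 : forall (f : R -> R -> R) x y dx dy,
  DL_pol 2 f x y dx dy =
  f x y + Derive (fun t => f t y) x * dx + Derive (fun t => f x t) y * dy
  + (Derive (fun t => Derive (fun z => f z y) t) x * dx^2
     + 2 * Derive (fun t => Derive (fun z => f t z) y) x * dx * dy
     + Derive (fun t => Derive (fun z => f x z) t) y * dy^2) / 2.
Proof.
  intros. unfold DL_pol, differential, partial_derive. simpl.
  assert (c00 : Binomial.C 0 0 = 1) by (unfold Binomial.C; simpl; field).
  assert (c10 : Binomial.C 1 0 = 1) by (unfold Binomial.C; simpl; field).
  assert (c11 : Binomial.C 1 1 = 1) by (unfold Binomial.C; simpl; field).
  assert (c20 : Binomial.C 2 0 = 1) by (unfold Binomial.C; simpl; field).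
  assert (c21 : Binomial.C 2 1 = 2) by (unfold Binomial.C; simpl; field).
  assert (c22 : Binomial.C 2 2 = 1) by (unfold Binomial.C; simpl; field).
  rewrite c00, c10, c11, c20, c21, c22. field.
Qed.

Definition OPENAT (U : pt -> Prop) (x y : R) :=
  exists r, 0 < r /\ forall a b, Rabs (a - x) < r -> Rabs (b - y) < r -> U (a,b).

Definition Lf (phi : pt -> R) (u d : pt) := pd false phi u * fst d + pd true phi u * snd d.
Definition Qf (phi : pt -> R) (u d : pt) :=
  pd false (pd false phi) u * (fst d)^2 + 2 * pd false (pd true phi) u * fst d * snd d
  + pd true (pd true phi) u * (snd d)^2.

Lemma TAY : forall U phi, smooth_on U phi -> forall x y, OPENAT U x y ->
  exists D r, 0 < r /\ forall a b, Rabs (a - x) < r -> Rabs (b - y) < r ->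
   Rabs (phi (a,b) - (phi (x,y) + Lf phi (x,y) (a - x, b - y) + Qf phi (x,y) (a - x, b - y) / 2))
     <= D * Rmax (Rabs (a - x)) (Rabs (b - y)) ^ 3.
Proof.
  intros U phi Hs x y [r0 [Hr0 HU]].
  destruct (Taylor_Lagrange_2d (fun a b => phi (a,b)) 2 x y) as [D [r HD]].
  { exists (mkposreal r0 Hr0). intros a b h1 h2. apply (exd U phi Hs 3 nil). apply HU; auto. }
  exists D, r. split. apply cond_pos. intros a b h1 h2.
  specialize (HD a b h1 h2). rewrite DL2 in HD.
  unfold Lf, Qf, pd; simpl. simpl in HD. rewrite <- Rplus_assoc. exact HD.
Qed.

Lemma DT : forall U phi, smooth_on U phi -> forall x y, OPENAT U x y ->
  forall d1 d2, exists D r, 0 < r /\ forall t, Rabs t < r ->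
   Rabs (phi (x + t*d1, y + t*d2) - phi (x,y) - t * Lf phi (x,y) (d1,d2)
         - t^2 / 2 * Qf phi (x,y) (d1,d2)) <= D * Rabs t ^ 3.
Proof.
  intros U phi Hs x y Ho d1 d2.
  destruct (TAY U phi Hs x y Ho) as [D [r [Hr HD]]].
  set (S := Rabs d1 + Rabs d2 + 1).
  assert (HS : 1 <= S) by (unfold S; pose proof (Rabs_pos d1); pose proof (Rabs_pos d2); lra).
  exists (Rabs D * S^3), (r / S). split. apply Rdiv_lt_0_compat; lra.
  intros t Ht.
  assert (Ht' : Rabs t * S < r).
  { apply Rmult_lt_reg_r with (/ S). apply Rinv_0_lt_compat; lra.
    replace (Rabs t * S * / S) with (Rabs t) by (field; lra). exact Ht. }
  assert (E1 : Rabs (x + t * d1 - x) <= Rabs t * S).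
  { replace (x + t*d1 - x) with (t*d1) by ring. rewrite Rabs_mult.
    apply Rmult_le_compat_l. apply Rabs_pos. unfold S; pose proof (Rabs_pos d2); lra. }
  assert (E2 : Rabs (y + t * d2 - y) <= Rabs t * S).
  { replace (y + t*d2 - y) with (t*d2) by ring. rewrite Rabs_mult.
    apply Rmult_le_compat_l. apply Rabs_pos. unfold S; pose proof (Rabs_pos d1); lra. }
  specialize (HD (x + t*d1) (y + t*d2) ltac:(lra) ltac:(lra)).
  replace (x + t * d1 - x) with (t*d1) in HD by ring.
  replace (y + t * d2 - y) with (t*d2) in HD by ring.
  assert (EQ : phi (x + t * d1, y + t * d2) - phi (x, y) - t * Lf phi (x, y) (d1, d2) -
     t ^ 2 / 2 * Qf phi (x, y) (d1, d2) =
     phi (x + t * d1, y + t * d2) - (phi (x, y) + Lf phi (x, y) (t * d1, t * d2) + Qf phi (x, y) (t * d1, t * d2) / 2)).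
  { unfold Lf, Qf; simpl; field. }
  rewrite EQ. eapply Rle_trans; [exact HD|].
  assert (HM0 : 0 <= Rmax (Rabs (t * d1)) (Rabs (t * d2))).
  { eapply Rle_trans; [apply Rabs_pos|apply Rmax_l]. }
  assert (HM : Rmax (Rabs (t * d1)) (Rabs (t * d2)) <= Rabs t * S).
  { apply Rmax_lub. replace (t*d1) with (x + t * d1 - x) by ring; auto.
    replace (t*d2) with (y + t * d2 - y) by ring; auto. }
  apply Rle_trans with (Rabs D * Rmax (Rabs (t * d1)) (Rabs (t * d2)) ^ 3).
  apply Rmult_le_compat_r. apply pow_le; auto. apply Rle_abs.
  replace (Rabs D * S ^ 3 * Rabs t ^ 3) with (Rabs D * (Rabs t * S) ^ 3) by ring.
  apply Rmult_le_compat_l. apply Rabs_pos. apply pow_incr. split; auto.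
Qed.

Lemma lerp_dir : forall x y h d1 d2 t,
  lerp (x,y) (x + h*d1, y + h*d2) t = (x + (t*h)*d1, y + (t*h)*d2).
Proof. intros. unfold lerp; simpl. f_equal; ring. Qed.



Lemma F1 : forall (U D : pt -> Prop) phi, smooth_on U phi -> (forall u, U u -> D u) ->
  convex_on D phi -> forall x y, OPENAT U x y -> forall d1 d2, 0 <= Qf phi (x,y) (d1,d2).
Proof.
  intros U D phi Hs HUD Hc x y Ho d1 d2.
  destruct (DT U phi Hs x y Ho d1 d2) as [K [r [Hr HK]]].
  destruct Ho as [r0 [Hr0 HU]].
  set (S := Rabs d1 + Rabs d2 + 1).
  assert (HS : 1 <= S) by (unfold S; pose proof (Rabs_pos d1); pose proof (Rabs_pos d2); lra).
  destruct (small_pos r (r0 / S) Hr ltac:(apply Rdiv_lt_0_compat; lra)) as [t0 [Ht0 [Ht1 Ht2]]].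
  apply (LIM0 0 (Qf phi (x,y) (d1,d2)) (2*K) t0 Ht0).
  intros t [Htp Htt].
  assert (HtS : t * S < r0).
  { apply Rmult_lt_reg_r with (/ S). apply Rinv_0_lt_compat; lra.
    replace (t * S * / S) with t by (field; lra). unfold Rdiv in Ht2; lra. }
  assert (B1 : Rabs (t*d1) < r0).
  { rewrite Rabs_mult, Rabs_pos_eq by lra. apply Rle_lt_trans with (t*S); auto.
    apply Rmult_le_compat_l; [lra|]. unfold S; pose proof (Rabs_pos d2); lra. }
  assert (B2 : Rabs (t*d2) < r0).
  { rewrite Rabs_mult, Rabs_pos_eq by lra. apply Rle_lt_trans with (t*S); auto.
    apply Rmult_le_compat_l; [lra|]. unfold S; pose proof (Rabs_pos d1); lra. }
  assert (Up : U (x + t*d1, y + t*d2)).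
  { apply HU; replace (x + t*d1 - x) with (t*d1) by ring; replace (y + t*d2 - y) with (t*d2) by ring; auto. }
  assert (Um : U (x + (-t)*d1, y + (-t)*d2)).
  { apply HU. replace (x + -t*d1 - x) with (-(t*d1)) by ring; rewrite Rabs_Ropp; auto.
    replace (y + -t*d2 - y) with (-(t*d2)) by ring; rewrite Rabs_Ropp; auto. }
  pose proof (Hc _ _ (1/2) (HUD _ Up) (HUD _ Um) ltac:(lra)) as Hmid.
  assert (Emid : lerp (x + t * d1, y + t * d2) (x + - t * d1, y + - t * d2) (1/2) = (x,y)).
  { unfold lerp; simpl; f_equal; field. }
  rewrite Emid in Hmid.
  pose proof (HK t ltac:(rewrite Rabs_pos_eq; lra)) as E1.
  pose proof (HK (-t) ltac:(rewrite Rabs_Ropp, Rabs_pos_eq; lra)) as E2.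
  rewrite Rabs_Ropp in E2. rewrite (Rabs_pos_eq t) in E1, E2 by lra.
  apply Rabs_le_between in E1. apply Rabs_le_between in E2.
  assert (Ht2p : 0 < t^2) by (apply pow_lt; lra).
  assert (H3 : t^3 = t^2 * t) by ring.
  assert (0 <= t^2 * (Qf phi (x,y) (d1,d2) + 2*K*t)).
  { nra. }
  assert (0 <= Qf phi (x,y) (d1,d2) + 2*K*t).
  { apply Rmult_le_reg_l with (t^2); auto. lra. }
  lra.
Qed.

Lemma F2 : forall (U D : pt -> Prop) phi, smooth_on U phi -> (forall u, U u -> D u) ->
  convex_on D phi -> forall x y, OPENAT U x y -> forall d1 d2 h, 0 < h ->
  D (x + h*d1, y + h*d2) ->
  h * Lf phi (x,y) (d1,d2) <= phi (x + h*d1, y + h*d2) - phi (x,y).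
Proof.
  intros U D phi Hs HUD Hc x y Ho d1 d2 h Hh HD.
  assert (HU0 : U (x,y)).
  { destruct Ho as [r0 [Hr0 HU]]. apply HU; rewrite Rminus_diag, Rabs_R0; auto. }
  destruct (DT U phi Hs x y Ho d1 d2) as [K [r [Hr HK]]].
  set (Q := Qf phi (x,y) (d1,d2)). set (L := Lf phi (x,y) (d1,d2)).
  fold Q L in HK.
  destruct (small_pos 1 (r / h) ltac:(lra) ltac:(apply Rdiv_lt_0_compat; lra)) as [t0 [Ht0 [Ht1 Ht2]]].
  apply (LIM0 _ _ (h^2 * Rabs Q / 2 + Rabs K * h^3) t0 Ht0).
  intros t [Htp Htt].
  pose proof (Hc (x,y) (x + h*d1, y + h*d2) t (HUD _ HU0) HD ltac:(lra)) as Hct.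
  rewrite lerp_dir in Hct.
  assert (Hth : t * h < r).
  { apply Rmult_lt_reg_r with (/ h). apply Rinv_0_lt_compat; lra.
    replace (t * h * / h) with t by (field; lra). unfold Rdiv in Ht2; lra. }
  pose proof (HK (t*h) ltac:(rewrite Rabs_pos_eq; nra)) as E.
  rewrite (Rabs_pos_eq (t*h)) in E by nra. apply Rabs_le_between in E.
  assert (A1 : - (t^2 * (h^2 * Rabs Q / 2)) <= (t*h)^2/2 * Q).
  { replace ((t*h)^2/2*Q) with (t^2 * (h^2 / 2 * Q)) by field.
    assert (0 <= t^2) by (apply pow_le; lra).
    assert (- (h^2 * Rabs Q/2) <= h^2/2*Q).
    { pose proof (Rle_abs (-Q)). rewrite Rabs_Ropp in H0. assert (0 <= h^2) by (apply pow_le; lra). nra. }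
    nra. }
  assert (A2 : K * (t*h)^3 <= t^2 * (Rabs K * h^3)).
  { replace (K*(t*h)^3) with ((K * h^3) * t^3) by ring.
    assert (t^3 <= t^2) by (replace (t^3) with (t^2 * t) by ring; assert (0 < t^2) by (apply pow_lt; lra); nra).
    assert (0 < h^3) by (apply pow_lt; lra).
    assert (K * h^3 <= Rabs K * h^3) by (apply Rmult_le_compat_r; [lra|apply Rle_abs]).
    assert (0 <= Rabs K * h^3) by (apply Rmult_le_pos; [apply Rabs_pos|lra]).
    assert (0 < t^3) by (apply pow_lt; lra).
    destruct (Rle_dec 0 (K*h^3)); nra. }
  assert (t * (h * L) <= t * (phi (x + h * d1, y + h * d2) - phi (x, y) + (h ^ 2 * Rabs Q / 2 + Rabs K * h ^ 3) * t)).
  { nra. }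
  apply Rmult_le_reg_l with t; lra.
Qed.

Lemma deriv_shift : forall (g : R -> R) y c l, is_derive g (y + c) l -> is_derive (fun s => g (y + s)) c l.
Proof.
  intros g y c l H.
  assert (H2 : is_derive (fun s : R => y + s) c 1).
  { auto_derive; auto; ring. }
  pose proof (is_derive_comp g (fun s => y + s) c l 1 H H2) as H3.
  unfold scal in H3; simpl in H3; unfold mult in H3; simpl in H3.
  rewrite Rmult_1_l in H3. exact H3.
Qed.

Lemma deriv_neg : forall (g : R -> R) y c l, is_derive g (y - c) l -> is_derive (fun s => g (y - s)) c (-l).
Proof.
  intros g y c l H.
  assert (H2 : is_derive (fun s : R => y - s) c (-1)).
  { auto_derive; auto; ring. }
  pose proof (is_derive_comp g (fun s => y - s) c l (-1) H H2) as H3.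
  unfold scal in H3; simpl in H3; unfold mult in H3; simpl in H3.
  replace (-1 * l) with (-l) in H3 by ring. exact H3.
Qed.

Lemma L1 : forall (g g1 : R -> R) y d r, 0 < r ->
  (forall t, Rabs (t - y) < r -> is_derive g t (g1 t)) -> is_derive g1 y d ->
  forall eta, 0 < eta -> exists tau, 0 < tau /\ forall t, 0 < t < tau ->
   (d - eta) * t^2 <= g (y + t) + g (y - t) - 2 * g y.
Proof.
  intros g g1 y d r Hr Hg Hg1 eta Heta.
  apply is_derive_Reals in Hg1.
  destruct (Hg1 (eta/2) ltac:(lra)) as [del Hdel].
  destruct (small_pos r del Hr (cond_pos del)) as [tau [Htau [Ht1 Ht2]]].
  exists tau. split; auto. intros t [Htp Htt].
  set (H := fun s => g (y + s) + g (y - s) - 2 * g y - (d - eta) * s^2).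
  set (H' := fun s => g1 (y + s) - g1 (y - s) - (d - eta) * (2 * s)).
  assert (HD : forall c, 0 <= c <= t -> derivable_pt_lim H c (H' c)).
  { intros c Hc. apply is_derive_Reals. unfold H, H'.
    assert (G1 : is_derive g (y + c) (g1 (y + c))).
    { apply Hg. replace (y + c - y) with c by ring. rewrite Rabs_pos_eq; lra. }
    assert (G2 : is_derive g (y - c) (g1 (y - c))).
    { apply Hg. replace (y - c - y) with (-c) by ring. rewrite Rabs_Ropp, Rabs_pos_eq; lra. }
    auto_derive.
    - repeat split; [exists (g1 (y+c)); exact G1 | exists (g1 (y-c)); exact G2].
    - replace (y + - c) with (y - c) by ring. change (fun x : R => g x) with g. rewrite (is_derive_unique _ _ _ G1), (is_derive_unique _ _ _ G2). ring. }
  destruct (MVT_cor2 H H' 0 t Htp HD) as [c [Hc1 Hc2]].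
  assert (Hpos : 0 <= H' c).
  { assert (A1 := Hdel c ltac:(lra) ltac:(rewrite Rabs_pos_eq; lra)).
    assert (A2 := Hdel (-c) ltac:(lra) ltac:(rewrite Rabs_Ropp, Rabs_pos_eq; lra)).
    replace (y + -c) with (y - c) in A2 by ring.
    apply Rabs_lt_between in A1. apply Rabs_lt_between in A2.
    destruct A1 as [A1 A1']. destruct A2 as [A2 A2'].
    assert (B1 : g1 (y + c) - g1 y >= (d - eta/2) * c).
    { assert ((g1 (y + c) - g1 y) / c * c = g1 (y + c) - g1 y) by (field; lra). nra. }
    assert (B2 : g1 (y - c) - g1 y <= - (d - eta/2) * c).
    { assert ((g1 (y - c) - g1 y) / - c * (-c) = g1 (y - c) - g1 y) by (field; lra). nra. }
    unfold H'. nra. }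
  assert (H t - H 0 >= 0) by (rewrite Hc1; nra).
  unfold H in H0. replace (y + 0) with y in H0 by ring. replace (y - 0) with y in H0 by ring.
  lra.
Qed.

Definition gb (T t : R) := t * sqrt (1 + ln (T / t)).
Definition g1b (T t : R) := sqrt (1 + ln (T / t)) - / (2 * sqrt (1 + ln (T / t))).
Definition g2b (T t : R) := - / (2 * t * sqrt (1 + ln (T / t)))
   - / (4 * t * (1 + ln (T / t)) * sqrt (1 + ln (T / t))).

Lemma gb0 : forall T, gb T 0 = 0.
Proof. intros; unfold gb; ring. Qed.

Lemma gbT : forall T, 0 < T -> gb T T = T.
Proof. intros T HT; unfold gb. replace (T/T) with 1 by (field; lra). rewrite ln_1.
  replace (1+0) with 1 by ring. rewrite sqrt_1; ring. Qed.

Lemma Lge1 : forall T t, 0 < t <= T -> 1 <= 1 + ln (T / t).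
Proof. intros T t Ht. assert (1 <= T/t).
  { apply Rmult_le_reg_r with t. lra. replace (T/t*t) with T by (field; lra). lra. }
  pose proof (ln_ge0 _ H). lra. Qed.

Lemma gb_bound : forall T t, 0 < t <= T -> 0 <= gb T t <= sqrt (T * t).
Proof.
  intros T t Ht. pose proof (Lge1 T t Ht) as HL. unfold gb. split.
  apply Rmult_le_pos. lra. apply sqrt_pos.
  assert (HTt : 0 < T / t) by (apply Rdiv_lt_0_compat; lra).
  pose proof (ln_le_xm1 _ HTt).
  replace (T * t) with (t^2 * (T / t)) by (field; lra).
  rewrite sqrt_mult by (try apply pow_le; lra). rewrite sqrt_pow2 by lra.
  apply Rmult_le_compat_l. lra. apply sqrt_le_1; lra.
Qed.

Lemma gb_d1 : forall T t, 0 < t -> 0 < 1 + ln (T / t) -> 0 < T -> is_derive (gb T) t (g1b T t).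
Proof.
  intros T t Ht HL HT. unfold gb, g1b. auto_derive.
  - repeat split; auto; try lra. apply Rdiv_lt_0_compat; lra.
  - change (T * / t) with (T / t).
    assert (0 < sqrt (1 + ln (T / t))) by (apply sqrt_lt_R0; lra).
    field. repeat split; lra.
Qed.

Lemma gb_d2 : forall T t, 0 < t -> 0 < 1 + ln (T / t) -> 0 < T -> is_derive (g1b T) t (g2b T t).
Proof.
  intros T t Ht HL HT. unfold g1b, g2b. auto_derive.
  - repeat split; auto; try lra; try (apply Rdiv_lt_0_compat; lra).
    assert (0 < sqrt (1 + ln (T / t))) by (apply sqrt_lt_R0; lra). lra.
  - change (T * / t) with (T / t).
    assert (HS : 0 < sqrt (1 + ln (T / t))) by (apply sqrt_lt_R0; lra).
    assert (HS2 : sqrt (1 + ln (T / t)) * sqrt (1 + ln (T / t)) = 1 + ln (T / t)) by (apply sqrt_sqrt; lra).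
    set (S := sqrt (1 + ln (T / t))) in *. 
    assert (E : ln (T / t) = S * S - 1) by (rewrite HS2; ring). clearbody S. rewrite E.
    field. repeat split; lra.
Qed.

Lemma gb_prod : forall T t, 0 < t <= T -> - (gb T t * g2b T t) <= 3/4 /\ g2b T t < 0.
Proof.
  intros T t Ht. pose proof (Lge1 T t Ht) as HL. unfold gb, g2b.
  assert (HS : 1 <= sqrt (1 + ln (T / t))).
  { apply Rle_trans with (sqrt 1). rewrite sqrt_1; lra. apply sqrt_le_1; lra. }
  assert (HS2 : sqrt (1 + ln (T / t)) * sqrt (1 + ln (T / t)) = 1 + ln (T / t)) by (apply sqrt_sqrt; lra).
  set (S := sqrt (1 + ln (T / t))) in *.
  assert (E : ln (T / t) = S * S - 1) by (rewrite HS2; ring). clearbody S. rewrite E.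
  replace (1 + (S*S-1)) with (S*S) by ring.
  split.
  - replace (- (t * S * (- / (2 * t * S) - / (4 * t * (S * S) * S)))) with (1/2 + /(4 * (S*S))) by (field; lra).
    assert (/ (4 * (S*S)) <= /4).
    { apply Rinv_le_contravar. lra. nra. }
    lra.
  - assert (0 < / (2 * t * S)) by (apply Rinv_0_lt_compat; nra).
    assert (0 < / (4 * t * (S * S) * S)).
    { apply Rinv_0_lt_compat. assert (0 < S*S) by nra. assert (0 < t * (S*S)) by nra. nra. }
    lra.
Qed.

Definition cl (a b x : R) := Rmax a (Rmin b x).

Lemma cl_in : forall a b x, a <= b -> a <= cl a b x <= b.
Proof. intros. unfold cl, Rmax, Rmin. repeat destruct (Rle_dec _ _); lra. Qed.

Lemma cl_id : forall a b x, a <= x <= b -> cl a b x = x.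
Proof. intros. unfold cl, Rmax, Rmin. repeat destruct (Rle_dec _ _); lra. Qed.

Lemma cl_lip : forall a b x z, a <= b -> Rabs (cl a b x - cl a b z) <= Rabs (x - z).
Proof. intros. unfold cl, Rmax, Rmin. repeat destruct (Rle_dec _ _);
  unfold Rabs; repeat destruct (Rcase_abs _); lra. Qed.

Lemma cont_pt_intro : forall (f : R -> R) x,
  (forall eps, 0 < eps -> exists del, 0 < del /\ forall z, Rabs (z - x) < del -> Rabs (f z - f x) < eps) ->
  continuity_pt f x.
Proof.
  intros f x H eps Heps. destruct (H eps Heps) as [del [Hd H2]].
  exists del. split; auto. intros z [_ Hz]. simpl in *. unfold R_dist in *. apply H2; auto.
Qed.

Lemma cont_pt_elim : forall (f : R -> R) x, continuity_pt f x ->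
  forall eps, 0 < eps -> exists del, 0 < del /\ forall z, Rabs (z - x) < del -> Rabs (f z - f x) < eps.
Proof.
  intros f x H eps Heps. destruct (H eps Heps) as [del [Hd H2]].
  exists del. split; auto. intros z Hz. destruct (Req_dec z x) as [->|hz].
  rewrite Rminus_diag, Rabs_R0; auto.
  apply (H2 z). split. split; auto. exact I. simpl. unfold R_dist. auto.
Qed.

Lemma c2d_y : forall f x y, continuity_2d_pt f x y -> continuity_pt (fun v => f x v) y.
Proof.
  intros f x y H. apply cont_pt_intro. intros eps He.
  destruct (H (mkposreal eps He)) as [del Hd]. exists del. split. apply cond_pos.
  intros z Hz. apply Hd; auto. rewrite Rminus_diag, Rabs_R0. apply cond_pos.
Qed.

Lemma EVT2 : forall (f : R -> R -> R) a b c d, a <= b -> c <= d ->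
  (forall x y, continuity_2d_pt f x y) ->
  exists x0 y0, a <= x0 <= b /\ c <= y0 <= d /\
    forall x y, a <= x <= b -> c <= y <= d -> f x y <= f x0 y0.
Proof.
  intros f a b c d Hab Hcd Hf.
  assert (Hmy : forall x, { m | c <= m <= d /\ forall y, c <= y <= d -> f x y <= f x m }).
  { intro x. apply constructive_indefinite_description.
    destruct (continuity_ab_maj (fun y => f x y) c d Hcd) as [m [H1 H2]].
    intros y _. apply c2d_y, Hf. exists m; split; auto. }
  set (my := fun x => proj1_sig (Hmy x)).
  assert (Hmy1 : forall x, c <= my x <= d) by (intro x; exact (proj1 (proj2_sig (Hmy x)))).
  assert (Hmy2 : forall x y, c <= y <= d -> f x y <= f x (my x)) by (intro x; exact (proj2 (proj2_sig (Hmy x)))).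
  set (m := fun x => f (cl a b x) (my (cl a b x))).
  assert (Hm : forall z, a <= z <= b -> continuity_pt m z).
  { intros z Hz. apply cont_pt_intro. intros eps He.
    destruct (uniform_continuity_2d f a b c d (fun x y _ _ => Hf x y) (mkposreal (eps/2) ltac:(lra))) as [del Hdel].
    exists del. split. apply cond_pos. intros z' Hz'.
    unfold m. set (x1 := cl a b z'). set (x2 := cl a b z).
    assert (Hx1 : a <= x1 <= b) by (apply cl_in; auto).
    assert (Hx2 : a <= x2 <= b) by (apply cl_in; auto).
    assert (Hx12 : Rabs (x1 - x2) < del) by (eapply Rle_lt_trans; [apply cl_lip; auto|auto]).
    assert (Hx21 : Rabs (x2 - x1) < del) by (rewrite Rabs_minus_sym; auto).
    assert (A1 := Hdel x2 (my x2) x1 (my x2) Hx2 (Hmy1 x2) Hx1 (Hmy1 x2) Hx12 ltac:(rewrite Rminus_diag, Rabs_R0; apply cond_pos)).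
    assert (A2 := Hdel x1 (my x1) x2 (my x1) Hx1 (Hmy1 x1) Hx2 (Hmy1 x1) Hx21 ltac:(rewrite Rminus_diag, Rabs_R0; apply cond_pos)).
    simpl in A1, A2.
    pose proof (Hmy2 x1 (my x2) (Hmy1 x2)). pose proof (Hmy2 x2 (my x1) (Hmy1 x1)).
    apply Rabs_lt_between in A1. apply Rabs_lt_between in A2.
    apply Rabs_lt_between. lra. }
  destruct (continuity_ab_maj m a b Hab Hm) as [x0 [H2 H1]].
  exists (cl a b x0), (my (cl a b x0)). split. apply cl_in; auto. split. auto.
  intros x y Hx Hy. specialize (H2 x Hx). unfold m in H2. rewrite (cl_id a b x Hx) in H2.
  eapply Rle_trans; [apply Hmy2; auto|]. exact H2.
Qed.

Lemma nxt_cases : forall n i, (i < n)%nat ->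
  ((S i < n)%nat /\ nxt n i = S i) \/ (S i = n /\ nxt n i = 0%nat).
Proof.
  intros n i Hi. unfold nxt. destruct (Nat.eq_dec (S i) n) as [h|h].
  - right. split; auto. rewrite h. apply Nat.mod_same. lia.
  - left. split. lia. apply Nat.mod_small. lia.
Qed.

Lemma nxt_lt : forall n i, (i < n)%nat -> (nxt n i < n)%nat.
Proof. intros n i Hi. destruct (nxt_cases n i Hi) as [[h1 h2]|[h1 h2]]; lia. Qed.

Definition qf (n : nat) (p : nat -> pt) (j : nat) (v : pt) :=
  cross (vsub (p (nxt n j)) (p j)) (vsub v (p j)).

Lemma qf_lerp : forall n p j a b t, qf n p j (lerp a b t) = (1 - t) * qf n p j a + t * qf n p j b.
Proof. intros. unfold qf, cross, vsub, lerp; simpl. ring. Qed.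

Lemma qf_nonneg : forall n p j k, ccw_convex_polygon n p -> (j < n)%nat -> (k < n)%nat ->
  0 <= qf n p j (p k).
Proof.
  intros n p j k Hc Hj Hk. destruct (Nat.eq_dec k j) as [->|h1].
  - unfold qf, cross, vsub; simpl. right; ring.
  - destruct (Nat.eq_dec k (nxt n j)) as [->|h2].
    + unfold qf, cross, vsub; simpl. right; ring.
    + left. apply Hc; auto.
Qed.


Lemma sumR_nonneg : forall m f, (forall k, 0 <= f k) -> 0 <= sumR m f.
Proof. induction m; intros f H; simpl. lra. pose proof (IHm f H). pose proof (H m). lra. Qed.

Lemma sumR_first : forall m f, (forall k, 0 <= f k) -> (1 <= m)%nat -> f 0%nat <= sumR m f.
Proof.
  induction m; intros f H Hm. lia. simpl. destruct m.
  - simpl. lra.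
  - pose proof (IHm f H ltac:(lia)). pose proof (H (S m)). lra.
Qed.

Lemma inv_nonneg : forall x, 0 <= x -> 0 <= / x.
Proof. intros x [h|h]. left; apply Rinv_0_lt_compat; auto. rewrite <- h, Rinv_0; lra. Qed.

Lemma vnorm_nonneg : forall z, 0 <= vnorm z.
Proof. intros; unfold vnorm; apply sqrt_pos. Qed.

Lemma term_lb : forall z Bd, (fst z <> 0 \/ snd z <> 0) -> Rabs (fst z) + Rabs (snd z) <= Bd ->
  / (2 * Bd) <= / (2 * vnorm z).
Proof.
  intros [z1 z2] Bd Hz HB; simpl in *.
  assert (Hd : 0 < z1 * z1 + z2 * z2) by (destruct Hz; nra).
  assert (Hv : 0 < vnorm (z1,z2)) by (unfold vnorm, dot; simpl; apply sqrt_lt_R0; lra).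
  assert (Hv2 : vnorm (z1,z2) <= Rabs z1 + Rabs z2).
  { unfold vnorm, dot; simpl. rewrite <- (sqrt_square (Rabs z1 + Rabs z2)) by (pose proof (Rabs_pos z1); pose proof (Rabs_pos z2); lra).
    apply sqrt_le_1_alt.
    assert (z1 * z1 = Rabs z1 * Rabs z1) by (rewrite <- Rabs_mult, Rabs_pos_eq; nra).
    assert (z2 * z2 = Rabs z2 * Rabs z2) by (rewrite <- Rabs_mult, Rabs_pos_eq; nra).
    pose proof (Rabs_pos z1); pose proof (Rabs_pos z2). nra. }
  apply Rinv_le_contravar; lra.
Qed.

Lemma abs3 : forall a b c, Rabs (a + b + c) <= Rabs a + Rabs b + Rabs c.
Proof. intros. eapply Rle_trans; [apply Rabs_triang|]. pose proof (Rabs_triang a b). lra. Qed.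


Lemma lip_cont : forall (f : R -> R) K x, 0 <= K -> (forall z, Rabs (f z - f x) <= K * Rabs (z - x)) ->
  continuity_pt f x.
Proof.
  intros f K x HK H. apply cont_pt_intro. intros eps He.
  exists (eps / (K + 1)). split. apply Rdiv_lt_0_compat; lra.
  intros z Hz. eapply Rle_lt_trans; [apply H|].
  apply Rle_lt_trans with ((K+1) * Rabs (z - x)). pose proof (Rabs_pos (z - x)); nra.
  apply Rmult_lt_reg_r with (/ (K+1)). apply Rinv_0_lt_compat; lra.
  replace ((K + 1) * Rabs (z - x) * / (K + 1)) with (Rabs (z - x)) by (field; lra). exact Hz.
Qed.

Lemma lift1 : forall f x y, continuity_pt f x -> continuity_2d_pt (fun u v => f u) x y.
Proof. intros. apply (continuity_1d_2d_pt_comp f (fun u v => u)); auto. apply continuity_2d_pt_id1. Qed.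
Lemma lift2 : forall f x y, continuity_pt f y -> continuity_2d_pt (fun u v => f v) x y.
Proof. intros. apply (continuity_1d_2d_pt_comp f (fun u v => v)); auto. apply continuity_2d_pt_id2. Qed.

Lemma cl_cont : forall a b x, a <= b -> continuity_pt (cl a b) x.
Proof. intros. apply (lip_cont _ 1). lra. intro z. rewrite Rmult_1_l. apply cl_lip; auto. Qed.

Lemma cont_of_derive : forall f x l, is_derive f x l -> continuity_pt f x.
Proof. intros f x l H. apply derivable_continuous_pt. exists l. apply is_derive_Reals. exact H. Qed.

Lemma gbcl_cont : forall T, 0 < T -> forall x, continuity_pt (fun t => gb T (cl 0 T t)) x.
Proof.
  intros T HT x. destruct (Req_dec (cl 0 T x) 0) as [h|h].
  - apply cont_pt_intro. intros eps He. exists (eps^2 / T). split. apply Rdiv_lt_0_compat; nra.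
    intros z Hz. rewrite h, gb0, Rminus_0_r.
    pose proof (cl_in 0 T z ltac:(lra)) as Hc. pose proof (cl_lip 0 T z x ltac:(lra)) as Hl.
    rewrite h, Rminus_0_r, Rabs_pos_eq in Hl by lra.
    destruct (Req_dec (cl 0 T z) 0) as [h'|h'].
    + rewrite h', gb0, Rabs_R0; auto.
    + pose proof (gb_bound T (cl 0 T z) ltac:(lra)) as [B1 B2].
      rewrite Rabs_pos_eq by auto. eapply Rle_lt_trans; [exact B2|].
      rewrite <- (sqrt_pow2 eps) by lra. apply sqrt_lt_1_alt. split. nra.
      apply Rle_lt_trans with (T * Rabs (z - x)). apply Rmult_le_compat_l; lra.
      apply Rmult_lt_reg_r with (/ T). apply Rinv_0_lt_compat; lra.
      replace (T * Rabs (z - x) * / T) with (Rabs (z - x)) by (field; lra). exact Hz.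
  - pose proof (cl_in 0 T x ltac:(lra)) as Hc.
    apply (continuity_pt_comp (cl 0 T) (gb T)). apply cl_cont; lra.
    apply (cont_of_derive _ _ (g1b T (cl 0 T x))). apply gb_d1; try lra.
    pose proof (Lge1 T (cl 0 T x) ltac:(lra)). lra.
Qed.


Lemma ball_R : forall (x y : R) (eps : posreal), Rabs (x - y) < eps -> ball y eps x.
Proof. intros x y eps H. unfold ball; simpl. unfold AbsRing_ball; simpl. unfold abs, minus, plus, opp; simpl. exact H. Qed.

Section Geo.
Variable n : nat.
Variable p : nat -> pt.
Variable i : nat.
Variable s : R.
Hypothesis Hn : (3 <= n)%nat.
Hypothesis Hc : ccw_convex_polygon n p.
Hypothesis Hi : (i < n)%nat.
Hypothesis Hs : 0 < s < 1.

Definition e1 := fst (vsub (p (nxt n i)) (p i)).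
Definition e2 := snd (vsub (p (nxt n i)) (p i)).
Definition us := lerp (p i) (p (nxt n i)) s.
Definition EE := e1^2 + e2^2.
Definition X (y1 y2 : R) : pt := (fst us + y1 * e1 - y2 * e2, snd us + y1 * e2 + y2 * e1).
Definition Y1 (u : pt) := ((fst u - fst us) * e1 + (snd u - snd us) * e2) / EE.
Definition Y2 (u : pt) := (e1 * (snd u - snd us) - e2 * (fst u - fst us)) / EE.
Definition del0 := Rmin s (1 - s) / 2.

Lemma EE_pos : 0 < EE.
Proof.
  assert (exists k, (k < n)%nat /\ k <> i /\ k <> nxt n i) as [k [Hk1 [Hk2 Hk3]]].
  { destruct (nxt_cases n i Hi) as [[h1 h2]|[h1 h2]]; rewrite h2.
    - destruct (Nat.eq_dec i 0) as [->|h]. exists 2%nat; lia. exists 0%nat; lia.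
    - exists 1%nat; lia. }
  pose proof (Hc i k Hi Hk1 Hk2 Hk3). unfold EE, e1, e2. unfold cross in H.
  destruct (vsub (p (nxt n i)) (p i)) as [a b]; simpl in *.
  destruct (Req_dec a 0) as [->|ha]. destruct (Req_dec b 0) as [->|hb]. lra.
  nra. nra.
Qed.

Lemma X_Y : forall u, X (Y1 u) (Y2 u) = u.
Proof.
  intros [a b]. pose proof EE_pos. unfold X, Y1, Y2; simpl. unfold EE in *.
  f_equal; field; lra.
Qed.

Lemma X_edge : forall y1, X y1 0 = lerp (p i) (p (nxt n i)) (s + y1).
Proof. intros. unfold X, us, lerp, e1, e2, vsub; simpl. f_equal; ring. Qed.

Lemma us_X : us = X 0 0.
Proof. unfold X. destruct us; simpl; f_equal; ring. Qed.

Lemma qi_X : forall y1 y2, qf n p i (X y1 y2) = y2 * EE.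
Proof. intros. unfold qf, X, us, EE, e1, e2, cross, vsub, lerp; simpl. ring. Qed.

Lemma Y2_U : forall u, polyU n p u -> 0 < Y2 u.
Proof.
  intros u Hu. pose proof (Hu i Hi) as H. fold (qf n p i u) in H.
  rewrite <- (X_Y u) in H. rewrite qi_X in H. pose proof EE_pos. nra.
Qed.

Lemma del0_pos : 0 < del0 /\ del0 < s /\ del0 < 1 - s.
Proof. unfold del0, Rmin; destruct (Rle_dec _ _); lra. Qed.

Lemma qj_X : forall j y1 y2, qf n p j (X y1 y2) = qf n p j (X y1 0) +
   y2 * cross (vsub (p (nxt n j)) (p j)) (- e2, e1).
Proof. intros. unfold qf, X, cross, vsub; simpl. ring. Qed.

Lemma GEO : exists T, 0 < T /\ forall j, (j < n)%nat -> j <> i ->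
  forall y1 y2, Rabs y1 <= del0 -> 0 <= y2 <= T -> 0 < qf n p j (X y1 y2).
Proof.
  destruct del0_pos as [Hd1 [Hd2 Hd3]].
  destruct (finite_min (fun j T => j <> i -> forall y1 y2, Rabs y1 <= del0 -> 0 <= y2 <= T -> 0 < qf n p j (X y1 y2)) n)
    as [T [HT HTj]].
  - intros j T T' HT' H hj y1 y2 hy1 hy2. apply H; auto. lra.
  - intros j Hj.
    set (qP := qf n p j (p i)). set (qQ := qf n p j (p (nxt n i))).
    set (cj := cross (vsub (p (nxt n j)) (p j)) (- e2, e1)).
    set (mu := Rmin s (1 - s) / 2 * (qP + qQ)).
    destruct (Nat.eq_dec j i) as [->|hji].
    + exists 1. split. lra. intro h; contradiction.
    + assert (HqP : 0 <= qP) by (apply qf_nonneg; auto).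
      assert (HqQ : 0 <= qQ) by (apply qf_nonneg; auto; apply nxt_lt; auto).
      assert (Hpos : 0 < qP + qQ).
      { destruct (Nat.eq_dec i (nxt n j)) as [h|h].
        - assert (0 < qQ); [|lra]. unfold qQ, qf.
          pose proof (nxt_lt n i Hi).
          apply Hc; auto;
            destruct (nxt_cases n j Hj) as [[a1 a2]|[a1 a2]];
            destruct (nxt_cases n i Hi) as [[b1 b2]|[b1 b2]]; lia.
        - assert (0 < qP); [|lra]. unfold qP, qf. apply Hc; auto. }
      assert (Hmu : 0 < mu).
      { unfold mu. apply Rmult_lt_0_compat; [unfold Rmin; destruct (Rle_dec _ _); lra | auto]. }
      exists (mu / (Rabs cj + 1)). split. apply Rdiv_lt_0_compat. auto. pose proof (Rabs_pos cj); lra.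
      intros _ y1 y2 hy1 hy2. rewrite qj_X, X_edge, qf_lerp. fold qP qQ cj.
      assert (Hm0 : mu <= (1 - (s + y1)) * qP + (s + y1) * qQ).
      { unfold mu. apply Rabs_le_between in hy1. unfold del0 in hy1.
        unfold Rmin in *; destruct (Rle_dec s (1-s)); nra. }
      assert (y2 * Rabs cj < mu).
      { destruct hy2 as [hy2 hy2'].
        apply Rle_lt_trans with (mu / (Rabs cj + 1) * Rabs cj).
        apply Rmult_le_compat_r. apply Rabs_pos. auto.
        apply Rlt_le_trans with (mu / (Rabs cj + 1) * (Rabs cj + 1)).
        apply Rmult_lt_compat_l. apply Rdiv_lt_0_compat; auto. pose proof (Rabs_pos cj); lra. lra.
        right; field. pose proof (Rabs_pos cj); lra. }
      assert (- (y2 * Rabs cj) <= y2 * cj).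
      { destruct hy2. pose proof (Rle_abs (-cj)) as Hab. rewrite Rabs_Ropp in Hab. nra. }
      lra.
  - exists T. split; [auto|]. intros j Hj hji; apply HTj; auto.
Qed.


Definition K0 := (Rabs e1 + Rabs e2 + 1) / EE.

Lemma K0_pos : 0 < K0.
Proof. unfold K0. pose proof EE_pos. pose proof (Rabs_pos e1). pose proof (Rabs_pos e2).
  apply Rdiv_lt_0_compat; lra. Qed.

Lemma Y1_X : forall y1 y2, Y1 (X y1 y2) = y1.
Proof. intros. pose proof EE_pos. unfold Y1, X, EE in *; simpl. field. lra. Qed.
Lemma Y2_X : forall y1 y2, Y2 (X y1 y2) = y2.
Proof. intros. pose proof EE_pos. unfold Y2, X, EE in *; simpl. field. lra. Qed.

Lemma Ylip : forall a b c d r, Rabs (a - c) <= r -> Rabs (b - d) <= r ->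
  Rabs (Y1 (a,b) - Y1 (c,d)) <= K0 * r /\ Rabs (Y2 (a,b) - Y2 (c,d)) <= K0 * r.
Proof.
  intros a b c d r H1 H2. pose proof EE_pos.
  assert (Hr : 0 <= r) by (eapply Rle_trans; [apply Rabs_pos|exact H1]).
  assert (E1 : Y1 (a,b) - Y1 (c,d) = ((a - c) * e1 + (b - d) * e2) / EE) by (unfold Y1; simpl; field; lra).
  assert (E2 : Y2 (a,b) - Y2 (c,d) = (e1 * (b - d) - e2 * (a - c)) / EE) by (unfold Y2; simpl; field; lra).
  assert (B1 : Rabs ((a - c) * e1) <= r * Rabs e1) by (rewrite Rabs_mult; apply Rmult_le_compat_r; auto; apply Rabs_pos).
  assert (B2 : Rabs ((b - d) * e2) <= r * Rabs e2) by (rewrite Rabs_mult; apply Rmult_le_compat_r; auto; apply Rabs_pos).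
  assert (B3 : Rabs (e1 * (b - d)) <= r * Rabs e1) by (rewrite Rabs_mult, Rmult_comm; apply Rmult_le_compat_r; auto; apply Rabs_pos).
  assert (B4 : Rabs (e2 * (a - c)) <= r * Rabs e2) by (rewrite Rabs_mult, Rmult_comm; apply Rmult_le_compat_r; auto; apply Rabs_pos).
  assert (Hi0 : 0 < / EE) by (apply Rinv_0_lt_compat; lra).
  split.
  - rewrite E1. unfold Rdiv. rewrite Rabs_mult, (Rabs_pos_eq (/EE)) by lra.
    apply Rle_trans with ((r*Rabs e1 + r*Rabs e2 + r) * /EE).
    apply Rmult_le_compat_r. lra.
    eapply Rle_trans; [apply Rabs_triang|lra].
    unfold K0. right. field. lra.
  - rewrite E2. unfold Rdiv. rewrite Rabs_mult, (Rabs_pos_eq (/EE)) by lra.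
    apply Rle_trans with ((r*Rabs e1 + r*Rabs e2 + r) * /EE).
    apply Rmult_le_compat_r. lra.
    pose proof (Rabs_triang (e1*(b-d)) (- (e2*(a-c)))) as T. rewrite Rabs_Ropp in T.
    replace (e1*(b-d) + - (e2*(a-c))) with (e1*(b-d) - e2*(a-c)) in T by ring. lra.
    unfold K0. right. field. lra.
Qed.

Definition T0 : R := proj1_sig (constructive_indefinite_description _ GEO).
Lemma T0_spec : 0 < T0 /\ forall j, (j < n)%nat -> j <> i ->
  forall y1 y2, Rabs y1 <= del0 -> 0 <= y2 <= T0 -> 0 < qf n p j (X y1 y2).
Proof. exact (proj2_sig (constructive_indefinite_description _ GEO)). Qed.

Lemma T0_pos : 0 < T0.
Proof. exact (proj1 T0_spec). Qed.

Lemma rect_U : forall y1 y2, Rabs y1 <= del0 -> 0 < y2 <= T0 -> polyU n p (X y1 y2).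
Proof.
  intros y1 y2 h1 h2 j Hj. fold (qf n p j (X y1 y2)).
  destruct (Nat.eq_dec j i) as [->|h].
  - rewrite qi_X. pose proof EE_pos. nra.
  - apply (proj2 T0_spec); auto. lra.
Qed.

Lemma rect_Ub : forall y1 y2, Rabs y1 <= del0 -> 0 <= y2 <= T0 -> polyUbar n p (X y1 y2).
Proof.
  intros y1 y2 h1 h2 j Hj. fold (qf n p j (X y1 y2)).
  destruct (Nat.eq_dec j i) as [->|h].
  - rewrite qi_X. pose proof EE_pos. nra.
  - left. apply (proj2 T0_spec); auto.
Qed.

Lemma U_Ub : forall u, polyU n p u -> polyUbar n p u.
Proof. intros u H j Hj. left. apply H; auto. Qed.

Lemma Xpair : forall y1 y2, X y1 y2 = (fst (X y1 y2), snd (X y1 y2)).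
Proof. intros; reflexivity. Qed.

Lemma X_shift : forall y1 y2 t1 t2,
  X (y1 + t1) (y2 + t2) = (fst (X y1 y2) + t1 * e1 - t2 * e2, snd (X y1 y2) + t1 * e2 + t2 * e1).
Proof. intros. unfold X; simpl. f_equal; ring. Qed.

Lemma rect_open : forall y1 y2, Rabs y1 < del0 -> 0 < y2 < T0 ->
  forall rho, 0 < rho -> rho <= del0 - Rabs y1 -> rho < y2 -> rho <= T0 - y2 ->
  forall a b, Rabs (a - fst (X y1 y2)) < rho / K0 -> Rabs (b - snd (X y1 y2)) < rho / K0 ->
  polyU n p (a,b) /\ Rabs (Y1 (a,b) - y1) <= rho /\ Rabs (Y2 (a,b) - y2) <= rho.
Proof.
  intros y1 y2 h1 h2 rho Hr r1 r2 r3 a b ha hb.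
  pose proof K0_pos.
  destruct (Ylip a b (fst (X y1 y2)) (snd (X y1 y2)) (rho / K0) ltac:(lra) ltac:(lra)) as [A1 A2].
  rewrite <- Xpair, Y1_X, Y2_X in *.
  replace (K0 * (rho / K0)) with rho in A1, A2 by (field; lra).
  split; [|split; auto].
  rewrite <- (X_Y (a,b)). apply rect_U.
  - apply Rabs_le_between in A1. apply Rabs_le_between. pose proof (Rabs_le_between y1 (Rabs y1)) as [Z _].
    specialize (Z (Rle_refl _)). lra.
  - apply Rabs_le_between in A2. lra.
Qed.

Lemma rect_openat : forall y1 y2, Rabs y1 < del0 -> 0 < y2 < T0 ->
  OPENAT (polyU n p) (fst (X y1 y2)) (snd (X y1 y2)).
Proof.
  intros y1 y2 h1 h2.
  destruct (small_pos (del0 - Rabs y1) (Rmin (y2/2) (T0 - y2)) ltac:(lra)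
     ltac:(unfold Rmin; destruct (Rle_dec _ _); lra)) as [rho [Hr [Hr1 Hr2]]].
  pose proof K0_pos.
  exists (rho / K0). split. apply Rdiv_lt_0_compat; lra.
  intros a b ha hb.
  assert (rho < y2) by (pose proof (Rmin_l (y2/2) (T0 - y2)); lra).
  assert (rho <= T0 - y2) by (pose proof (Rmin_r (y2/2) (T0 - y2)); lra).
  exact (proj1 (rect_open y1 y2 h1 h2 rho Hr Hr1 H0 H1 a b ha hb)).
Qed.

Lemma near_us : forall rho, 0 < rho -> forall a b,
  Rabs (a - fst us) < rho / K0 -> Rabs (b - snd us) < rho / K0 ->
  Rabs (Y1 (a,b)) <= rho /\ Rabs (Y2 (a,b)) <= rho.
Proof.
  intros rho Hr a b ha hb. pose proof K0_pos.
  rewrite us_X in ha, hb.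
  destruct (Ylip a b (fst (X 0 0)) (snd (X 0 0)) (rho / K0) ltac:(lra) ltac:(lra)) as [A1 A2].
  rewrite <- Xpair, Y1_X, Y2_X in *.
  replace (K0 * (rho / K0)) with rho in A1, A2 by (field; lra).
  rewrite Rminus_0_r in A1, A2. auto.
Qed.


Variable A : R.
Variable b : nat -> R.
Variable phi : pt -> R.
Hypothesis HA : 0 <= A.
Hypothesis Hsol : is_solution n p A b phi.

Lemma Hcont : continuous_on (polyUbar n p) phi. Proof. apply Hsol. Qed.
Lemma Hconv : convex_on (polyUbar n p) phi. Proof. apply Hsol. Qed.
Lemma Hsm : smooth_on (polyU n p) phi. Proof. apply Hsol. Qed.
Lemma Hhess : forall u, polyU n p u -> hess_det phi u = Vfun A n p u. Proof. apply Hsol. Qed.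
Lemma Hedge : forall t, 0 <= t <= 1 ->
  phi (lerp (p i) (p (nxt n i)) t) = (1 - t) * b i + t * b (nxt n i).
Proof. intros. apply Hsol; auto. Qed.

Definition cc := b (nxt n i) - b i.
Definition ell (y1 : R) := b i + (s + y1) * cc.
Definition G (y1 y2 : R) := phi (X y1 y2) - ell y1.

Lemma phi_edge : forall y1, Rabs y1 <= del0 -> phi (X y1 0) = ell y1.
Proof.
  intros y1 h. destruct del0_pos as [d1 [d2 d3]]. apply Rabs_le_between in h.
  rewrite X_edge, Hedge by lra. unfold ell, cc. ring.
Qed.

Lemma G_edge : forall y1, Rabs y1 <= del0 -> G y1 0 = 0.
Proof. intros. unfold G. rewrite phi_edge; auto. ring. Qed.

Lemma phi_us : phi us = ell 0.
Proof. rewrite us_X. apply phi_edge. rewrite Rabs_R0. destruct del0_pos; lra. Qed.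

Definition Cup := Rmax (G (- del0) T0) (G del0 T0) / T0.

Lemma G_top : forall y1, Rabs y1 <= del0 -> G y1 T0 <= Cup * T0.
Proof.
  intros y1 h. destruct del0_pos as [d1 [d2 d3]]. pose proof T0_pos.
  unfold Cup. replace (Rmax (G (- del0) T0) (G del0 T0) / T0 * T0) with (Rmax (G (- del0) T0) (G del0 T0)) by (field; lra).
  set (t := (y1 + del0) / (2 * del0)).
  apply Rabs_le_between in h.
  assert (Ht : 0 <= t <= 1).
  { unfold t. split. apply Rmult_le_pos; [lra|left; apply Rinv_0_lt_compat; lra].
    apply Rmult_le_reg_r with (2*del0). lra. replace ((y1 + del0) / (2 * del0) * (2 * del0)) with (y1 + del0) by (field; lra). lra. }
  assert (EX : lerp (X (- del0) T0) (X del0 T0) t = X y1 T0).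
  { unfold lerp, X, t; simpl. f_equal; field; lra. }
  assert (Ub1 : polyUbar n p (X (- del0) T0)) by (apply rect_Ub; [rewrite Rabs_Ropp, Rabs_pos_eq; lra | lra]).
  assert (Ub2 : polyUbar n p (X del0 T0)) by (apply rect_Ub; [rewrite Rabs_pos_eq; lra | lra]).
  pose proof (Hconv _ _ t Ub1 Ub2 Ht) as Hcv. rewrite EX in Hcv.
  assert (El : ell y1 = (1 - t) * ell (- del0) + t * ell del0).
  { unfold ell, t. field. lra. }
  unfold G. rewrite El.
  assert (G (- del0) T0 <= Rmax (G (- del0) T0) (G del0 T0)) by apply Rmax_l.
  assert (G del0 T0 <= Rmax (G (- del0) T0) (G del0 T0)) by apply Rmax_r.
  unfold G in *. nra.
Qed.

Lemma G_up : forall y1 y2, Rabs y1 <= del0 -> 0 <= y2 <= T0 -> G y1 y2 <= Cup * y2.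
Proof.
  intros y1 y2 h1 h2. pose proof T0_pos.
  set (t := y2 / T0).
  assert (Ht : 0 <= t <= 1).
  { unfold t. split. apply Rmult_le_pos; [lra|left; apply Rinv_0_lt_compat; lra].
    apply Rmult_le_reg_r with T0. lra. replace (y2 / T0 * T0) with y2 by (field; lra). lra. }
  assert (EX : lerp (X y1 0) (X y1 T0) t = X y1 y2).
  { unfold lerp, X, t; simpl. f_equal; field; lra. }
  assert (Ub1 : polyUbar n p (X y1 0)) by (apply rect_Ub; lra).
  assert (Ub2 : polyUbar n p (X y1 T0)) by (apply rect_Ub; lra).
  pose proof (Hconv _ _ t Ub1 Ub2 Ht) as Hcv. rewrite EX, phi_edge in Hcv by auto.
  pose proof (G_top y1 h1).
  assert (E : Cup * y2 = t * (Cup * T0)) by (unfold t; field; lra).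
  rewrite E. unfold G in *. nra.
Qed.


Lemma V_lb : exists lam, 0 < lam /\ forall y1 y2, Rabs y1 <= del0 -> 0 < y2 <= T0 ->
  lam <= Vfun A n p (X y1 y2).
Proof.
  pose proof T0_pos. destruct del0_pos as [d1 [d2 d3]].
  set (B1 := Rabs (fst us - fst (p 0%nat)) + del0 * Rabs e1 + T0 * Rabs e2).
  set (B2 := Rabs (snd us - snd (p 0%nat)) + del0 * Rabs e2 + T0 * Rabs e1).
  assert (0 <= B1) by (unfold B1; pose proof (Rabs_pos (fst us - fst (p 0%nat))); pose proof (Rabs_pos e1); pose proof (Rabs_pos e2); nra).
  assert (0 <= B2) by (unfold B2; pose proof (Rabs_pos (snd us - snd (p 0%nat))); pose proof (Rabs_pos e1); pose proof (Rabs_pos e2); nra).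
  exists (/ (2 * (B1 + B2 + 1))). split. apply Rinv_0_lt_compat; lra.
  intros y1 y2 h1 h2.
  assert (HU := rect_U y1 y2 h1 h2).
  set (z := vsub (X y1 y2) (p 0%nat)).
  assert (Hz : fst z <> 0 \/ snd z <> 0).
  { pose proof (HU 0%nat ltac:(lia)) as Q. fold (qf n p 0 (X y1 y2)) in Q.
    destruct (Req_dec (fst z) 0) as [h|h]; [|left; auto].
    destruct (Req_dec (snd z) 0) as [h'|h']; [|right; auto].
    exfalso. unfold qf, cross in Q. fold z in Q. rewrite h, h' in Q. lra. }
  assert (Hb : Rabs (fst z) + Rabs (snd z) <= B1 + B2 + 1).
  { assert (Rabs (fst z) <= B1).
    { unfold z, vsub, X; cbn [fst snd].
      replace (fst us + y1 * e1 - y2 * e2 - fst (p 0%nat)) with ((fst us - fst (p 0%nat)) + y1 * e1 + (- (y2 * e2))) by ring.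
      eapply Rle_trans; [apply abs3|]. rewrite Rabs_Ropp, !Rabs_mult. unfold B1.
      rewrite (Rabs_pos_eq y2) by lra.
      pose proof (Rabs_pos e1); pose proof (Rabs_pos e2).
      assert (Rabs y1 * Rabs e1 <= del0 * Rabs e1) by (apply Rmult_le_compat_r; lra).
      assert (Rabs y1 * Rabs e2 <= del0 * Rabs e2) by (apply Rmult_le_compat_r; lra).
      assert (y2 * Rabs e2 <= T0 * Rabs e2) by (apply Rmult_le_compat_r; lra).
      assert (y2 * Rabs e1 <= T0 * Rabs e1) by (apply Rmult_le_compat_r; lra).
      lra. }
    assert (Rabs (snd z) <= B2).
    { unfold z, vsub, X; cbn [fst snd].
      replace (snd us + y1 * e2 + y2 * e1 - snd (p 0%nat)) with ((snd us - snd (p 0%nat)) + y1 * e2 + y2 * e1) by ring.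
      eapply Rle_trans; [apply abs3|]. rewrite !Rabs_mult. unfold B2.
      rewrite (Rabs_pos_eq y2) by lra.
      pose proof (Rabs_pos e1); pose proof (Rabs_pos e2).
      assert (Rabs y1 * Rabs e1 <= del0 * Rabs e1) by (apply Rmult_le_compat_r; lra).
      assert (Rabs y1 * Rabs e2 <= del0 * Rabs e2) by (apply Rmult_le_compat_r; lra).
      assert (y2 * Rabs e2 <= T0 * Rabs e2) by (apply Rmult_le_compat_r; lra).
      assert (y2 * Rabs e1 <= T0 * Rabs e1) by (apply Rmult_le_compat_r; lra).
      lra. }
    lra. }
  pose proof (term_lb z _ Hz Hb).
  unfold Vfun.
  assert (Hnn : forall k, 0 <= / (2 * vnorm (vsub (X y1 y2) (p k)))).
  { intro k. apply inv_nonneg. pose proof (vnorm_nonneg (vsub (X y1 y2) (p k))). lra. }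
  pose proof (sumR_first n _ Hnn ltac:(lia)) as HS1. fold z in HS1. cbv beta in HS1. fold z in HS1. lra.
Qed.


Definition lam := proj1_sig (constructive_indefinite_description _ V_lb).
Lemma lam_spec : 0 < lam /\ forall y1 y2, Rabs y1 <= del0 -> 0 < y2 <= T0 ->
  lam <= Vfun A n p (X y1 y2).
Proof. exact (proj2_sig (constructive_indefinite_description _ V_lb)). Qed.

Lemma exists_k : exists k, 0 < k /\ 3 * k^2 < 2 * lam * EE^2 * del0^2.
Proof.
  destruct lam_spec as [Hl _]. pose proof EE_pos. destruct del0_pos as [d1 _].
  set (a := 2 * lam * EE^2 * del0^2 / 3).
  assert (Ha : 0 < a).
  { unfold a. assert (0 < EE^2) by (apply pow_lt; lra). assert (0 < del0^2) by (apply pow_lt; lra).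
    assert (0 < lam * EE^2) by nra. assert (0 < lam * EE^2 * del0^2) by nra. lra. }
  exists (Rmin 1 (a/2)). split. unfold Rmin; destruct (Rle_dec _ _); lra.
  assert (Rmin 1 (a/2) <= 1) by apply Rmin_l. assert (Rmin 1 (a/2) <= a/2) by apply Rmin_r.
  assert (0 < Rmin 1 (a/2)) by (unfold Rmin; destruct (Rle_dec _ _); lra).
  assert (Rmin 1 (a/2) ^ 2 <= Rmin 1 (a/2)) by nra.
  unfold a in *. lra.
Qed.

Definition kk := proj1_sig (constructive_indefinite_description _ exists_k).
Lemma kk_spec : 0 < kk /\ 3 * kk^2 < 2 * lam * EE^2 * del0^2.
Proof. exact (proj2_sig (constructive_indefinite_description _ exists_k)). Qed.

Definition Cp := Cup + kk.
Definition w (y1 y2 : R) := Cp * y2 - kk * gb T0 y2 * (1 - y1^2 / del0^2).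
Definition F (y1 y2 : R) := G y1 y2 - w y1 y2.
Definition Ft (a b : R) := F (cl (- del0) del0 a) (cl 0 T0 b).

Lemma c_phiX : forall a0 b0, continuity_2d_pt (fun a b => phi (X (cl (- del0) del0 a) (cl 0 T0 b))) a0 b0.
Proof.
  intros a0 b0. destruct del0_pos as [d1 _]. pose proof T0_pos.
  set (y1 := cl (- del0) del0 a0). set (y2 := cl 0 T0 b0).
  assert (Hy1 := cl_in (- del0) del0 a0 ltac:(lra)). assert (Hy2 := cl_in 0 T0 b0 ltac:(lra)).
  fold y1 y2 in Hy1, Hy2.
  assert (Hub : polyUbar n p (X y1 y2)) by (apply rect_Ub; [apply Rabs_le_between; lra | lra]).
  pose proof (Hcont _ Hub) as Hc0. rewrite Xpair in Hc0.
  intros eps.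
  destruct (cont_within_eps _ phi _ _ Hc0 eps (cond_pos eps)) as [r [Hr Hr2]].
  set (S := Rabs e1 + Rabs e2 + 1).
  assert (HS : 1 <= S) by (unfold S; pose proof (Rabs_pos e1); pose proof (Rabs_pos e2); lra).
  exists (mkposreal (r / S) ltac:(apply Rdiv_lt_0_compat; lra)). simpl.
  intros a bb ha hb.
  set (z1 := cl (- del0) del0 a). set (z2 := cl 0 T0 bb).
  assert (Hz1 := cl_in (- del0) del0 a ltac:(lra)). assert (Hz2 := cl_in 0 T0 bb ltac:(lra)).
  fold z1 z2 in Hz1, Hz2.
  assert (L1 : Rabs (z1 - y1) < r / S) by (eapply Rle_lt_trans; [apply cl_lip; lra|exact ha]).
  assert (L2 : Rabs (z2 - y2) < r / S) by (eapply Rle_lt_trans; [apply cl_lip; lra|exact hb]).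
  assert (Hub2 : polyUbar n p (X z1 z2)) by (apply rect_Ub; [apply Rabs_le_between; lra | lra]).
  assert (M1 : Rabs (z1 - y1) * S < r).
  { apply Rmult_lt_reg_r with (/ S). apply Rinv_0_lt_compat; lra.
    replace (Rabs (z1 - y1) * S * / S) with (Rabs (z1 - y1)) by (field; lra). exact L1. }
  assert (M2 : Rabs (z2 - y2) * S < r).
  { apply Rmult_lt_reg_r with (/ S). apply Rinv_0_lt_compat; lra.
    replace (Rabs (z2 - y2) * S * / S) with (Rabs (z2 - y2)) by (field; lra). exact L2. }
  assert (Q := Hr2 (fst (X z1 z2)) (snd (X z1 z2))).
  rewrite <- !Xpair in Q. apply Q; auto.
  - unfold X; cbn [fst snd].
    replace (fst us + z1 * e1 - z2 * e2 - (fst us + y1 * e1 - y2 * e2)) with ((z1 - y1) * e1 + (- ((z2 - y2) * e2))) by ring.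
    eapply Rle_lt_trans; [apply Rabs_triang|]. rewrite Rabs_Ropp, !Rabs_mult.
    unfold S in *. pose proof (Rabs_pos e1); pose proof (Rabs_pos e2); pose proof (Rabs_pos (z1 - y1)); pose proof (Rabs_pos (z2 - y2)). nra.
  - unfold X; cbn [fst snd].
    replace (snd us + z1 * e2 + z2 * e1 - (snd us + y1 * e2 + y2 * e1)) with ((z1 - y1) * e2 + (z2 - y2) * e1) by ring.
    eapply Rle_lt_trans; [apply Rabs_triang|]. rewrite !Rabs_mult.
    unfold S in *. pose proof (Rabs_pos e1); pose proof (Rabs_pos e2); pose proof (Rabs_pos (z1 - y1)); pose proof (Rabs_pos (z2 - y2)). nra.
Qed.

Lemma Ft_cont : forall a bb, continuity_2d_pt Ft a bb.
Proof.
  intros a bb. destruct del0_pos as [d1 _]. pose proof T0_pos.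
  assert (C1 := c_phiX a bb).
  assert (C2 : continuity_2d_pt (fun u v => ell (cl (- del0) del0 u)) a bb).
  { apply lift1. apply (continuity_pt_comp (cl (- del0) del0) ell). apply cl_cont; lra.
    apply (cont_of_derive _ _ cc). unfold ell. auto_derive; auto; ring. }
  assert (C3 : continuity_2d_pt (fun u v => Cp * cl 0 T0 v) a bb).
  { apply lift2. apply (continuity_pt_comp (cl 0 T0) (fun t => Cp * t)). apply cl_cont; lra.
    apply (cont_of_derive _ _ Cp). auto_derive; auto; ring. }
  assert (C4 : continuity_2d_pt (fun u v => gb T0 (cl 0 T0 v)) a bb).
  { apply lift2. apply gbcl_cont; auto. }
  assert (C5 : continuity_2d_pt (fun u v => 1 - (cl (- del0) del0 u)^2 / del0^2) a bb).
  { apply lift1. apply (continuity_pt_comp (cl (- del0) del0) (fun t => 1 - t^2/del0^2)). apply cl_cont; lra.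
    apply (cont_of_derive _ _ (- (2 * cl (- del0) del0 a / del0^2))). auto_derive. auto. field. lra. }
  assert (C6 := continuity_2d_pt_mult _ _ a bb C4 C5).
  assert (C7 := continuity_2d_pt_mult _ _ a bb (continuity_2d_pt_const a bb kk) C6).
  assert (C8 := continuity_2d_pt_minus _ _ a bb C3 C7).
  assert (C9 := continuity_2d_pt_minus _ _ a bb C1 C2).
  assert (C10 := continuity_2d_pt_minus _ _ a bb C9 C8).
  eapply continuity_2d_pt_ext; [|exact C10].
  intros u v. unfold Ft, F, G, w. simpl. ring.
Qed.


Lemma F_bdry_bot : forall y1, Rabs y1 <= del0 -> F y1 0 = 0.
Proof. intros. unfold F, w. rewrite G_edge, gb0 by auto. ring. Qed.

Lemma F_bdry_top : forall y1, Rabs y1 <= del0 -> F y1 T0 <= 0.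
Proof.
  intros y1 h. pose proof T0_pos. destruct del0_pos as [d1 _]. destruct kk_spec as [Hk _].
  pose proof (G_up y1 T0 h ltac:(lra)). unfold F, w. rewrite gbT by auto.
  assert (0 <= y1^2 / del0^2).
  { apply Rmult_le_pos. apply pow2_ge_0. left; apply Rinv_0_lt_compat, pow_lt; lra. }
  assert (0 <= kk * T0 * (y1^2/del0^2)) by (apply Rmult_le_pos; [nra|auto]).
  unfold Cp.
  replace (G y1 T0 - ((Cup + kk) * T0 - kk * T0 * (1 - y1 ^ 2 / del0 ^ 2))) with (G y1 T0 - Cup * T0 - kk * T0 * (y1^2/del0^2)) by ring.
  lra.
Qed.

Lemma F_bdry_side : forall y1 y2, Rabs y1 = del0 -> 0 <= y2 <= T0 -> F y1 y2 <= 0.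
Proof.
  intros y1 y2 h h2. pose proof T0_pos. destruct del0_pos as [d1 _]. destruct kk_spec as [Hk _].
  pose proof (G_up y1 y2 ltac:(lra) h2). unfold F, w.
  assert (E : y1^2 = del0^2) by (rewrite <- h; unfold Rabs; destruct (Rcase_abs y1); ring).
  rewrite E. replace (1 - del0^2/del0^2) with 0 by (field; lra). unfold Cp. nra.
Qed.

Lemma X_sh1 : forall x y t, X (x + t) y = (fst (X x y) + t * e1, snd (X x y) + t * e2).
Proof. intros. unfold X; cbn [fst snd]. f_equal; ring. Qed.
Lemma X_sh2 : forall x y t, X x (y + t) = (fst (X x y) + t * (- e2), snd (X x y) + t * e1).
Proof. intros. unfold X; cbn [fst snd]. f_equal; ring. Qed.

Lemma HESSC : forall x0 y0, Rabs x0 < del0 -> 0 < y0 < T0 ->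
  (forall y1 y2, Rabs y1 <= del0 -> 0 <= y2 <= T0 -> F y1 y2 <= F x0 y0) -> False.
Proof.
  intros x0 y0 hx hy Hmax.
  pose proof T0_pos. destruct del0_pos as [d1 _]. destruct kk_spec as [Hk Hk2].
  destruct lam_spec as [Hl Hlam]. pose proof EE_pos as HE.
  assert (Ho := rect_openat x0 y0 hx hy).
  set (u1 := fst (X x0 y0)). set (u2 := snd (X x0 y0)). fold u1 u2 in Ho.
  assert (Hu0 : X x0 y0 = (u1, u2)) by reflexivity.
  assert (HUD : forall u, polyU n p u -> polyUbar n p u) by exact U_Ub.
  set (Qe := Qf phi (u1,u2) (e1,e2)). set (Qm := Qf phi (u1,u2) (-e2,e1)).
  set (gy := gb T0 y0). set (th := 1 - x0^2/del0^2).
  assert (Hgy : 0 <= gy) by (apply gb_bound; lra).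
  assert (Hth : 0 <= th <= 1).
  { unfold th. apply Rabs_lt_between in hx.
    assert (x0^2 <= del0^2) by nra. assert (0 <= x0^2) by apply pow2_ge_0.
    assert (0 < del0^2) by (apply pow_lt; lra).
    split. apply Rle_trans with (1 - del0^2/del0^2). right; field; lra.
    apply Rplus_le_compat_l, Ropp_le_contravar. apply Rmult_le_compat_r. left; apply Rinv_0_lt_compat; lra. lra.
    assert (0 <= x0^2/del0^2) by (apply Rmult_le_pos; [lra|left; apply Rinv_0_lt_compat; lra]). lra. }
  assert (Sa : Qe <= 2 * kk * gy / del0^2).
  { destruct (DT _ phi Hsm u1 u2 Ho e1 e2) as [K1 [r1 [Hr1 HK1]]].
    destruct (small_pos r1 (del0 - Rabs x0) Hr1 ltac:(lra)) as [t0 [Ht0 [Ht01 Ht02]]].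
    apply (LIM0 _ _ (2*K1) t0 Ht0). intros t [htp htt].
    assert (A1 := Hmax (x0 + t) y0 ltac:(apply Rabs_le_between; apply Rabs_lt_between in hx; pose proof (Rabs_le_between x0 (Rabs x0)) as [Z _]; specialize (Z (Rle_refl _)); lra) ltac:(lra)).
    assert (A2 := Hmax (x0 + - t) y0 ltac:(apply Rabs_le_between; apply Rabs_lt_between in hx; pose proof (Rabs_le_between x0 (Rabs x0)) as [Z _]; specialize (Z (Rle_refl _)); lra) ltac:(lra)).
    unfold F, G in A1, A2. rewrite X_sh1 in A1, A2. fold u1 u2 in A1, A2. rewrite Hu0 in A1, A2.
    assert (B1 := HK1 t ltac:(rewrite Rabs_pos_eq; lra)).
    assert (B2 := HK1 (-t) ltac:(rewrite Rabs_Ropp, Rabs_pos_eq; lra)).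
    rewrite Rabs_Ropp in B2. rewrite (Rabs_pos_eq t) in B1, B2 by lra.
    apply Rabs_le_between in B1. apply Rabs_le_between in B2. fold Qe in B1, B2.
    assert (Ew : w (x0 + t) y0 + w (x0 + - t) y0 - 2 * w x0 y0 = 2 * kk * gy / del0^2 * t^2).
    { unfold w, gy. field. lra. }
    assert (El : ell (x0 + t) + ell (x0 + - t) - 2 * ell x0 = 0) by (unfold ell; ring).
    assert (Hsum : t^2 * Qe - 2 * K1 * t^3 <= 2 * kk * gy / del0^2 * t^2).
    { replace ((-t)^2) with (t^2) in B2 by ring. replace ((-t)^3) with (- t^3) in B2 by ring.
      replace (- t * Lf phi (u1,u2) (e1,e2)) with (-(t * Lf phi (u1,u2) (e1,e2))) in B2 by ring.
      lra. }
    assert (Ht2 : 0 < t^2) by (apply pow_lt; lra).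
    apply Rmult_le_reg_l with (t^2); auto.
    replace (t^2 * (2 * kk * gy / del0^2 + 2 * K1 * t)) with (2 * kk * gy / del0^2 * t^2 + 2 * K1 * t^3) by ring.
    lra. }
  assert (Sb : Qm <= - kk * th * g2b T0 y0).
  { destruct (DT _ phi Hsm u1 u2 Ho (-e2) e1) as [K2 [r2 [Hr2 HK2]]].
    assert (Hgd1 : forall t, Rabs (t - y0) < Rmin y0 (T0 - y0) -> is_derive (gb T0) t (g1b T0 t)).
    { intros t ht. assert (ht' := Rmin_l y0 (T0 - y0)). assert (ht'' := Rmin_r y0 (T0 - y0)).
      apply Rabs_lt_between in ht. apply gb_d1; try lra.
      pose proof (Lge1 T0 t ltac:(lra)). lra. }
    assert (Hgd2 : is_derive (g1b T0) y0 (g2b T0 y0)).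
    { apply gb_d2; try lra. pose proof (Lge1 T0 y0 ltac:(lra)). lra. }
    assert (Hrm : 0 < Rmin y0 (T0 - y0)) by (unfold Rmin; destruct (Rle_dec _ _); lra).
    apply (LIM0 _ _ (kk * th) 1 ltac:(lra)). intros eta [heta heta'].
    destruct (L1 (gb T0) (g1b T0) y0 (g2b T0 y0) _ Hrm Hgd1 Hgd2 eta heta) as [tau [Htau Htau2]].
    destruct (small_pos r2 (Rmin tau (Rmin y0 (T0 - y0))) Hr2 ltac:(unfold Rmin; repeat destruct (Rle_dec _ _); lra)) as [t0 [Ht0 [Ht01 Ht02]]].
    assert (t0 <= tau /\ t0 <= y0 /\ t0 <= T0 - y0).
    { pose proof (Rmin_l tau (Rmin y0 (T0 - y0))). pose proof (Rmin_r tau (Rmin y0 (T0 - y0))).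
      pose proof (Rmin_l y0 (T0 - y0)). pose proof (Rmin_r y0 (T0 - y0)). lra. }
    apply (LIM0 _ _ (2*K2) t0 Ht0). intros t [htp htt].
    assert (A1 := Hmax x0 (y0 + t) ltac:(lra) ltac:(lra)).
    assert (A2 := Hmax x0 (y0 + - t) ltac:(lra) ltac:(lra)).
    unfold F, G in A1, A2. rewrite X_sh2 in A1, A2. fold u1 u2 in A1, A2. rewrite Hu0 in A1, A2.
    assert (B1 := HK2 t ltac:(rewrite Rabs_pos_eq; lra)).
    assert (B2 := HK2 (-t) ltac:(rewrite Rabs_Ropp, Rabs_pos_eq; lra)).
    rewrite Rabs_Ropp in B2. rewrite (Rabs_pos_eq t) in B1, B2 by lra.
    apply Rabs_le_between in B1. apply Rabs_le_between in B2. fold Qm in B1, B2.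
    assert (Hg := Htau2 t ltac:(lra)).
    assert (Ew : w x0 (y0 + t) + w x0 (y0 + - t) - 2 * w x0 y0 =
       - kk * th * (gb T0 (y0 + t) + gb T0 (y0 - t) - 2 * gb T0 y0)).
    { unfold w, th. replace (y0 + - t) with (y0 - t) by ring. ring. }
    assert (Hkt : 0 <= kk * th) by nra.
    assert (Ew2 : - kk * th * (gb T0 (y0 + t) + gb T0 (y0 - t) - 2 * gb T0 y0) <= - kk * th * ((g2b T0 y0 - eta) * t^2)).
    { nra. }
    assert (Hsum : t^2 * Qm - 2 * K2 * t^3 <= - kk * th * ((g2b T0 y0 - eta) * t^2)).
    { replace ((-t)^2) with (t^2) in B2 by ring. replace ((-t)^3) with (- t^3) in B2 by ring.
      replace (- t * Lf phi (u1,u2) (-e2,e1)) with (-(t * Lf phi (u1,u2) (-e2,e1))) in B2 by ring.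
      lra. }
    assert (Ht2 : 0 < t^2) by (apply pow_lt; lra).
    apply Rmult_le_reg_l with (t^2); auto.
    replace (t^2 * (- kk * th * g2b T0 y0 + kk * th * eta + 2 * K2 * t)) with (- kk * th * ((g2b T0 y0 - eta) * t^2) + 2 * K2 * t^3) by ring.
    lra. }
  assert (Sc : 0 <= Qm) by (apply (F1 _ _ phi Hsm HUD Hconv u1 u2 Ho)).
  destruct Ho as [r0 [Hr0 HUo]].
  assert (HUu0 : polyU n p (u1,u2)) by (apply HUo; rewrite Rminus_diag, Rabs_R0; auto).
  assert (Sd : pd false (pd true phi) (u1,u2) = pd true (pd false phi) (u1,u2)).
  { apply (Schwarz (fun a c => phi (a,c)) u1 u2).
    - exists (mkposreal r0 Hr0). intros a c ha hc. assert (HU := HUo a c ha hc).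
      split. exact (proj1 (Hsm nil) false (a,c) HU).
      split. exact (proj1 (Hsm nil) true (a,c) HU).
      split. exact (proj1 (Hsm (true :: nil)) false (a,c) HU).
      exact (proj1 (Hsm (false :: nil)) true (a,c) HU).
    - apply (cont2d (iter_pd (false :: true :: nil) phi)). apply (proj2 (Hsm _)). auto.
    - apply (cont2d (iter_pd (true :: false :: nil) phi)). apply (proj2 (Hsm _)). auto. }
  assert (Se : lam <= hess_det phi (u1,u2)).
  { rewrite Hhess by auto. rewrite <- Hu0. apply Hlam; lra. }
  assert (Sf : Qe * Qm >= hess_det phi (u1,u2) * EE^2).
  { unfold hess_det. rewrite <- Sd. unfold Qe, Qm, Qf, EE. cbn [fst snd].
    set (a11 := pd false (pd false phi) (u1, u2)).
    set (a12 := pd false (pd true phi) (u1, u2)).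
    set (a22 := pd true (pd true phi) (u1, u2)).
    assert (Eq : (a11 * e1^2 + 2 * a12 * e1 * e2 + a22 * e2^2) * (a11 * (-e2)^2 + 2 * a12 * (-e2) * e1 + a22 * e1^2)
       = (a11 * a22 - a12 * a12) * (e1^2 + e2^2)^2 + (a11 * e1 * (-e2) + a12 * (e1 * e1 - e2 * e2) + a22 * e2 * e1)^2) by ring.
    rewrite Eq. pose proof (pow2_ge_0 (a11 * e1 * (-e2) + a12 * (e1 * e1 - e2 * e2) + a22 * e2 * e1)). lra. }
  assert (Hg2 := gb_prod T0 y0 ltac:(lra)). destruct Hg2 as [Hg2a Hg2b].
  assert (Sg : Qe * Qm <= 2 * kk^2 * th * (- (gy * g2b T0 y0)) / del0^2).
  { assert (Qe * Qm <= 2 * kk * gy / del0^2 * Qm) by (apply Rmult_le_compat_r; auto).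
    assert (0 <= 2 * kk * gy / del0^2).
    { apply Rmult_le_pos. nra. left; apply Rinv_0_lt_compat, pow_lt; lra. }
    assert (2 * kk * gy / del0^2 * Qm <= 2 * kk * gy / del0^2 * (- kk * th * g2b T0 y0)) by (apply Rmult_le_compat_l; auto).
    replace (2 * kk ^ 2 * th * - (gy * g2b T0 y0) / del0 ^ 2) with (2 * kk * gy / del0 ^ 2 * (- kk * th * g2b T0 y0)) by (field; lra).
    lra. }
  fold gy in Hg2a.
  assert (0 <= - (gy * g2b T0 y0)).
  { pose proof (Rmult_le_compat_l gy (g2b T0 y0) 0 Hgy (Rlt_le _ _ Hg2b)) as Hm. rewrite Rmult_0_r in Hm. lra. }
  assert (th * (- (gy * g2b T0 y0)) <= 3/4).
  { assert (th * (- (gy * g2b T0 y0)) <= 1 * (- (gy * g2b T0 y0))) by (apply Rmult_le_compat_r; lra). lra. }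
  assert (Hfin : 2 * kk^2 * th * (- (gy * g2b T0 y0)) / del0^2 <= 3 * kk^2 / (2 * del0^2)).
  { assert (0 < del0^2) by (apply pow_lt; lra).
    apply Rmult_le_reg_r with (del0^2); auto.
    replace (2 * kk ^ 2 * th * - (gy * g2b T0 y0) / del0 ^ 2 * del0 ^ 2) with (2 * kk^2 * (th * - (gy * g2b T0 y0))) by (field; lra).
    replace (3 * kk ^ 2 / (2 * del0 ^ 2) * del0 ^ 2) with (3 * kk^2 / 2) by (field; lra).
    assert (0 <= kk^2) by apply pow2_ge_0. nra. }
  assert (Hl2 : lam * EE^2 <= Qe * Qm).
  { assert (0 <= EE^2) by apply pow2_ge_0. nra. }
  assert (Hcontra : 3 * kk^2 / (2 * del0^2) < lam * EE^2).
  { assert (0 < del0^2) by (apply pow_lt; lra).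
    apply Rmult_lt_reg_r with (2 * del0^2). lra.
    replace (3 * kk ^ 2 / (2 * del0 ^ 2) * (2 * del0 ^ 2)) with (3 * kk^2) by (field; lra). lra. }
  lra.
Qed.


Lemma MAXP : forall y1 y2, Rabs y1 <= del0 -> 0 <= y2 <= T0 -> F y1 y2 <= 0.
Proof.
  intros y1 y2 h1 h2. pose proof T0_pos. destruct del0_pos as [d1 _].
  destruct (EVT2 Ft (- del0) del0 0 T0 ltac:(lra) ltac:(lra) Ft_cont) as [x0 [y0 [Hx0 [Hy0 Hm]]]].
  assert (HF : forall a c, - del0 <= a <= del0 -> 0 <= c <= T0 -> Ft a c = F a c).
  { intros a c ha hc. unfold Ft. rewrite !cl_id; auto. }
  assert (Hmax : forall a c, Rabs a <= del0 -> 0 <= c <= T0 -> F a c <= F x0 y0).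
  { intros a c ha hc. apply Rabs_le_between in ha. rewrite <- HF, <- (HF x0 y0); auto. }
  assert (Hx0' : Rabs x0 <= del0) by (apply Rabs_le_between; lra).
  assert (F x0 y0 <= 0).
  { destruct (Rle_dec (F x0 y0) 0) as [h|h]; auto. exfalso.
    destruct (Req_dec y0 0) as [hy0|hy0].
    { subst y0. rewrite F_bdry_bot in h; auto. lra. }
    destruct (Req_dec y0 T0) as [hyT|hyT].
    { subst y0. pose proof (F_bdry_top x0 Hx0'). lra. }
    destruct (Req_dec (Rabs x0) del0) as [hx|hx].
    { pose proof (F_bdry_side x0 y0 hx Hy0). lra. }
    apply (HESSC x0 y0); auto. lra. lra. }
  pose proof (Hmax y1 y2 h1 h2). lra.
Qed.

Lemma BAR : forall K, exists h, 0 < h < T0 /\ phi (X 0 h) - phi us <= - K * h.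
Proof.
  intros K. pose proof T0_pos. destruct del0_pos as [d1 _]. destruct kk_spec as [Hk _].
  set (Z := Rabs (Cp + K) / kk + 1).
  assert (HZ : 1 <= Z) by (unfold Z; assert (0 <= Rabs (Cp + K) / kk) by (apply Rmult_le_pos; [apply Rabs_pos | left; apply Rinv_0_lt_compat; lra]); lra).
  set (h := T0 * exp (- Z^2)).
  assert (He : exp (- Z^2) < 1).
  { rewrite <- exp_0. apply exp_increasing. assert (0 < Z^2) by (apply pow_lt; lra). lra. }
  assert (Hh : 0 < h < T0).
  { unfold h. pose proof (exp_pos (- Z^2)). split. nra. nra. }
  exists h. split; auto.
  pose proof (MAXP 0 h ltac:(rewrite Rabs_R0; lra) ltac:(lra)) as HM.
  unfold F, G, w in HM. rewrite phi_us.
  assert (HT : T0 / h = exp (Z^2)).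
  { unfold h. rewrite exp_Ropp. field. split. pose proof (exp_pos (Z^2)); lra. lra. }
  unfold gb in HM. rewrite HT, ln_exp in HM.
  assert (HS : Z <= sqrt (1 + Z^2)).
  { rewrite <- (sqrt_pow2 Z) at 1 by lra. apply sqrt_le_1_alt. lra. }
  assert (HkZ : kk * Z = Rabs (Cp + K) + kk) by (unfold Z; field; lra).
  pose proof (Rle_abs (Cp + K)).
  replace (0 ^ 2 / del0 ^ 2) with 0 in HM by (field; lra).
  assert (kk * h * Z <= kk * h * sqrt (1 + Z^2)).
  { apply Rmult_le_compat_l; [nra|auto]. }
  assert (kk * h * Z = h * (Rabs (Cp + K) + kk)) by (rewrite <- HkZ; ring).
  nra.
Qed.


Lemma vnorm_e : vnorm (vsub (p (nxt n i)) (p i)) = sqrt EE.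
Proof. unfold vnorm, dot, EE, e1, e2. f_equal. ring. Qed.

Lemma Xfst0 : forall h, fst (X 0 h) = fst us + h * (- e2).
Proof. intros; unfold X; cbn [fst snd]; ring. Qed.
Lemma Xsnd0 : forall h, snd (X 0 h) = snd us + h * e1.
Proof. intros; unfold X; cbn [fst snd]; ring. Qed.
Lemma Xfst1 : forall h, fst (X h 0) = fst us + h * e1.
Proof. intros; unfold X; cbn [fst snd]; ring. Qed.
Lemma Xsnd1 : forall h, snd (X h 0) = snd us + h * e2.
Proof. intros; unfold X; cbn [fst snd]; ring. Qed.

Lemma PART1 : filterlim (fun u => dot (grad phi u)
     (snd (vsub (p (nxt n i)) (p i)) / vnorm (vsub (p (nxt n i)) (p i)),
      - fst (vsub (p (nxt n i)) (p i)) / vnorm (vsub (p (nxt n i)) (p i))))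
   (within (polyU n p) (locally us)) (Rbar_locally p_infty).
Proof.
  intros P [M HM]. unfold filtermap, within.
  pose proof T0_pos. destruct del0_pos as [d1 _]. pose proof EE_pos as HE. pose proof K0_pos as HK0.
  assert (HV : 0 < sqrt EE) by (apply sqrt_lt_R0; auto).
  set (K := Rabs M * sqrt EE + 2).
  destruct (BAR K) as [h [Hh Hbar]].
  assert (Ub1 : polyUbar n p (X 0 h)) by (apply rect_Ub; [rewrite Rabs_R0; lra|lra]).
  pose proof (Hcont _ Ub1) as C1. rewrite Xpair in C1.
  destruct (cont_within_eps _ phi _ _ C1 (h/2) ltac:(lra)) as [r1 [Hr1 Hr1']].
  assert (Ub2 : polyUbar n p us) by (rewrite us_X; apply rect_Ub; [rewrite Rabs_R0; lra|lra]).
  pose proof (Hcont _ Ub2) as C2. rewrite (surjective_pairing us) in C2.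
  destruct (cont_within_eps _ phi _ _ C2 (h/2) ltac:(lra)) as [r2 [Hr2 Hr2']].
  set (rho := Rmin del0 (T0 - h) / 2).
  assert (Hrho : 0 < rho /\ rho < del0 /\ rho < T0 - h).
  { unfold rho, Rmin. destruct (Rle_dec _ _); lra. }
  destruct Hrho as [Hrho1 [Hrho2 Hrho3]].
  destruct (small_pos r1 (Rmin r2 (rho / K0)) Hr1 ltac:(unfold Rmin; destruct (Rle_dec _ _); [lra|apply Rdiv_lt_0_compat; lra])) as [r [Hr [Hra Hrb]]].
  assert (r <= r2 /\ r <= rho / K0).
  { pose proof (Rmin_l r2 (rho/K0)); pose proof (Rmin_r r2 (rho/K0)); lra. }
  rewrite (surjective_pairing us). apply locally2_intro. exists r. split; auto.
  intros a c ha hc HU. apply HM.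
  destruct (near_us rho Hrho1 a c ltac:(lra) ltac:(lra)) as [Hy1 Hy2].
  assert (Hy2p := Y2_U (a,c) HU).
  set (y1 := Y1 (a,c)) in *. set (y2 := Y2 (a,c)) in *.
  assert (Hac : X y1 y2 = (a,c)) by apply X_Y.
  assert (Ho := rect_openat y1 y2 ltac:(lra) ltac:(apply Rabs_le_between in Hy2; lra)).
  rewrite Hac in Ho. simpl in Ho.
  assert (HP : X y1 (y2 + h) = (a + h * (- e2), c + h * e1)) by (rewrite X_sh2, Hac; reflexivity).
  assert (UbP : polyUbar n p (a + h * (- e2), c + h * e1)).
  { rewrite <- HP. apply rect_Ub. lra. apply Rabs_le_between in Hy2; lra. }
  pose proof (F2 _ _ phi Hsm U_Ub Hconv a c Ho (-e2) e1 h ltac:(lra) UbP) as Hf2.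
  assert (Q1 := Hr1' (a + h * - e2) (c + h * e1) ltac:(rewrite Xfst0; replace (a + h * - e2 - (fst us + h * - e2)) with (a - fst us) by ring; lra)
     ltac:(rewrite Xsnd0; replace (c + h * e1 - (snd us + h * e1)) with (c - snd us) by ring; lra) UbP).
  rewrite <- Xpair in Q1.
  assert (Q2 := Hr2' a c ltac:(lra) ltac:(lra) (U_Ub _ HU)).
  rewrite <- surjective_pairing in Q2.
  apply Rabs_lt_between in Q1. apply Rabs_lt_between in Q2.
  assert (HL : Lf phi (a,c) (-e2,e1) <= 1 - K).
  { apply Rmult_le_reg_l with h. lra. lra. }
  unfold dot, grad. cbn [fst snd]. rewrite vnorm_e. fold e1 e2.
  unfold Lf in HL. cbn [fst snd] in HL.
  set (P10 := pd false phi (a,c)) in *. set (P01 := pd true phi (a,c)) in *.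
  replace (P10 * (e2 / sqrt EE) + P01 * (- e1 / sqrt EE)) with ((- (P10 * - e2 + P01 * e1)) / sqrt EE) by (field; lra).
  apply Rmult_lt_reg_r with (sqrt EE); auto.
  replace (- (P10 * - e2 + P01 * e1) / sqrt EE * sqrt EE) with (- (P10 * - e2 + P01 * e1)) by (field; lra).
  unfold K in HL. pose proof (Rle_abs M).
  assert (M * sqrt EE <= Rabs M * sqrt EE) by (apply Rmult_le_compat_r; lra).
  lra.
Qed.

Lemma PART2 : filterlim (fun u => dot (grad phi u) (vsub (p (nxt n i)) (p i)))
   (within (polyU n p) (locally us)) (locally (b (nxt n i) - b i)).
Proof.
  apply filterlim_locally. intros eps. unfold within.
  pose proof T0_pos. destruct del0_pos as [d1 _]. pose proof EE_pos as HE. pose proof K0_pos as HK0.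
  pose proof (cond_pos eps) as Heps.
  set (h := del0 / 2).
  assert (Ub1 : polyUbar n p (X h 0)) by (apply rect_Ub; [rewrite Rabs_pos_eq; unfold h; lra|lra]).
  pose proof (Hcont _ Ub1) as C1. rewrite Xpair in C1.
  destruct (cont_within_eps _ phi _ _ C1 (eps * h / 4) ltac:(unfold h; nra)) as [r1 [Hr1 Hr1']].
  assert (Ub3 : polyUbar n p (X (-h) 0)) by (apply rect_Ub; [rewrite Rabs_Ropp, Rabs_pos_eq; unfold h; lra|lra]).
  pose proof (Hcont _ Ub3) as C3. rewrite Xpair in C3.
  destruct (cont_within_eps _ phi _ _ C3 (eps * h / 4) ltac:(unfold h; nra)) as [r3 [Hr3 Hr3']].
  assert (Ub2 : polyUbar n p us) by (rewrite us_X; apply rect_Ub; [rewrite Rabs_R0; lra|lra]).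
  pose proof (Hcont _ Ub2) as C2. rewrite (surjective_pairing us) in C2.
  destruct (cont_within_eps _ phi _ _ C2 (eps * h / 4) ltac:(unfold h; nra)) as [r2 [Hr2 Hr2']].
  set (rho := Rmin h T0 / 2).
  assert (Hrho : 0 < rho /\ rho < h /\ rho < T0).
  { unfold rho, Rmin, h. destruct (Rle_dec _ _); lra. }
  destruct Hrho as [Hrho1 [Hrho2 Hrho3]].
  destruct (small_pos (Rmin r1 r3) (Rmin r2 (rho / K0)) ltac:(unfold Rmin; destruct (Rle_dec _ _); lra) ltac:(unfold Rmin; destruct (Rle_dec _ _); [lra|apply Rdiv_lt_0_compat; lra])) as [r [Hr [Hra Hrb]]].
  assert (r <= r1 /\ r <= r3 /\ r <= r2 /\ r <= rho / K0).
  { pose proof (Rmin_l r2 (rho/K0)); pose proof (Rmin_r r2 (rho/K0));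
    pose proof (Rmin_l r1 r3); pose proof (Rmin_r r1 r3); lra. }
  rewrite (surjective_pairing us). apply locally2_intro. exists r. split; auto.
  intros a c ha hc HU. apply ball_R.
  destruct (near_us rho Hrho1 a c ltac:(lra) ltac:(lra)) as [Hy1 Hy2].
  assert (Hy2p := Y2_U (a,c) HU).
  set (y1 := Y1 (a,c)) in *. set (y2 := Y2 (a,c)) in *.
  assert (Hac : X y1 y2 = (a,c)) by apply X_Y.
  apply Rabs_le_between in Hy1. apply Rabs_le_between in Hy2.
  assert (Ho := rect_openat y1 y2 ltac:(apply Rabs_lt_between; unfold h in *; lra) ltac:(lra)).
  rewrite Hac in Ho. simpl in Ho.
  assert (HP : X (y1 + h) (y2) = (a + h * e1, c + h * e2)) by (rewrite X_sh1, Hac; reflexivity).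
  assert (HM : X (y1 + - h) (y2) = (a + h * (- e1), c + h * (- e2))).
  { rewrite X_sh1, Hac. simpl. f_equal; ring. }
  assert (UbP : polyUbar n p (a + h * e1, c + h * e2)).
  { rewrite <- HP. apply rect_Ub. apply Rabs_le_between. unfold h in *; lra. lra. }
  assert (UbM : polyUbar n p (a + h * (- e1), c + h * (- e2))).
  { rewrite <- HM. apply rect_Ub. apply Rabs_le_between. unfold h in *; lra. lra. }
  assert (Hhp : 0 < h) by (unfold h; lra).
  pose proof (F2 _ _ phi Hsm U_Ub Hconv a c Ho e1 e2 h Hhp UbP) as Hf1.
  pose proof (F2 _ _ phi Hsm U_Ub Hconv a c Ho (-e1) (-e2) h Hhp UbM) as Hf2.
  assert (Q1 := Hr1' (a + h * e1) (c + h * e2) ltac:(rewrite Xfst1; replace (a + h * e1 - (fst us + h * e1)) with (a - fst us) by ring; lra)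
     ltac:(rewrite Xsnd1; replace (c + h * e2 - (snd us + h * e2)) with (c - snd us) by ring; lra) UbP).
  rewrite <- Xpair in Q1.
  assert (Q3 := Hr3' (a + h * - e1) (c + h * - e2) ltac:(rewrite Xfst1; replace (a + h * - e1 - (fst us + - h * e1)) with (a - fst us) by ring; lra)
     ltac:(rewrite Xsnd1; replace (c + h * - e2 - (snd us + - h * e2)) with (c - snd us) by ring; lra) UbM).
  rewrite <- Xpair in Q3.
  assert (Q2 := Hr2' a c ltac:(lra) ltac:(lra) (U_Ub _ HU)).
  rewrite <- surjective_pairing in Q2.
  rewrite phi_edge in Q1 by (rewrite Rabs_pos_eq; unfold h; lra).
  rewrite phi_edge in Q3 by (rewrite Rabs_Ropp, Rabs_pos_eq; unfold h; lra).
  rewrite phi_us in Q2.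
  apply Rabs_lt_between in Q1. apply Rabs_lt_between in Q2. apply Rabs_lt_between in Q3.
  unfold ell in Q1, Q2, Q3.
  assert (EL : Lf phi (a,c) (-e1,-e2) = - Lf phi (a,c) (e1,e2)) by (unfold Lf; simpl; ring).
  rewrite EL in Hf2.
  set (L := Lf phi (a,c) (e1,e2)) in *.
  replace (b i + (s + h) * cc) with (b i + s * cc + h * cc) in Q1 by ring.
  replace (b i + (s + - h) * cc) with (b i + s * cc - h * cc) in Q3 by ring.
  replace (b i + (s + 0) * cc) with (b i + s * cc) in Q2 by ring.
  replace (h * - L) with (- (h * L)) in Hf2 by ring.
  assert (L1' : h * L <= h * cc + eps * h / 2) by lra.
  assert (L2' : h * cc - eps * h / 2 <= h * L) by lra.
  assert (L <= cc + eps / 2).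
  { apply Rmult_le_reg_l with h; auto. replace (h * (cc + eps / 2)) with (h * cc + eps * h / 2) by field. lra. }
  assert (cc - eps / 2 <= L).
  { apply Rmult_le_reg_l with h; auto. replace (h * (cc - eps / 2)) with (h * cc - eps * h / 2) by field. lra. }
  unfold dot, grad. cbn [fst snd]. fold e1 e2. fold cc.
  change (pd false phi (a, c) * e1 + pd true phi (a, c) * e2) with L.
  apply Rabs_lt_between. lra.
Qed.

End Geo.

Theorem mainTheorem5 (n : nat) (p : nat -> pt) (A : R) (b : nat -> R)
    (phi : pt -> R) (i : nat) (s : R) :
  (3 <= n)%nat ->
  ccw_convex_polygon n p ->
  0 <= A ->
  is_solution n p A b phi ->
  (i < n)%nat ->
  0 < s < 1 ->
  let ustar := lerp (p i) (p (nxt n i)) s in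
  let e := vsub (p (nxt n i)) (p i) in
  let nu := (snd e / vnorm e, - fst e / vnorm e) in
  filterlim (fun u => dot (grad phi u) nu)
    (within (polyU n p) (locally ustar)) (Rbar_locally p_infty) /\
  filterlim (fun u => dot (grad phi u) e)
    (within (polyU n p) (locally ustar)) (locally (b (nxt n i) - b i)).
Proof.
  intros Hn Hc HA Hsol Hi Hs. cbv zeta. split.
  - exact (PART1 n p i s Hn Hc Hi Hs A b phi HA Hsol).
  - exact (PART2 n p i s Hn Hc Hi Hs A b phi Hsol).
Qed.
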